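(* Let $X$ be a Tychonoff space. Then: (i) the games $G_1(\mathscr N[K(X)],\neg\Omega_X)$, $G_1(\mathscr N_{C_k(X)}(\mathbf 0),\neg\Omega_{C_p(X),\mathbf 0})$ and $G_1(\mathscr T_{C_k(X)},\mathrm{CD}_{C_p(X)})$ are equivalent; (ii) the games $G_1(\mathcal K_X,\Omega_X)$, $G_1(\Omega_{C_k(X),\mathbf 0},\Omega_{C_p(X),\mathbf 0})$ and $G_1(\mathcal D_{C_k(X)},\Omega_{C_p(X),\mathbf 0})$ are equivalent; (iii) each game in (i) is dual to each game in (ii); (iv) $\mathrm{I}\underset{\mathrm{pre}}{\uparrow}G_1(\mathscr T_{C_k(X)},\mathrm{CD}_{C_p(X)})$ iff $X$ is $\sigma$-compact iff $\mathrm{cof}(\mathscr N_{C_k(X)}(\mathbf 0);\mathscr N_{C_p(X)}(\mathbf 0),\supseteq)=\omega$; (v) the games $G_1(\mathscr N[K(X)],\neg\Gamma_X)$ and $G_1(\mathscr N_{C_k(X)}(\mathbf 0),\neg\Gamma_{C_p(X),\mathbf 0})$ are equivalent for player One to $G_1(\mathscr N[K(X)],\neg\Omega_X)$ and $G_1(\mathscr N_{C_k(X)}(\mathbf 0),\neg\Omega_{C_p(X),\mathbf 0})$; (vi) $G_1(\mathcal K_X,\Omega_X)$ and $G_1(\mathcal K_X,\Gamma_X)$ are equivalent for player Two.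
   Context: $K(X)$ is the family of nonempty compact subsets of $X$. $C_p(X)$ ($C_k(X)$) is the set of continuous $f:X\to\mathbb R$ with the topology of pointwise convergence (uniform convergence on compact sets), generated by sets $[f;A,\varepsilon]=\{g:\sup_{x\in A}|f(x)-g(x)|<\varepsilon\}$ with $A$ finite (resp. compact), $\varepsilon>0$; $\mathbf 0$ is the zero function. $\Omega_X$ is the set of $\omega$-covers of $X$: open covers $\mathscr U$ with $X\notin\mathscr U$ such that every finite $F\subseteq X$ lies in some $U\in\mathscr U$. $\mathcal K_X$ is the set of $k$-covers: open covers $\mathscr U$ with $X\notin\mathscr U$ such that every compact $K\subseteq X$ lies in some member. $\Gamma_X$ is the set of $\gamma$-covers: infinite open covers $\mathscr U$ with $X\notin\mathscr U$ such that for every finite $F\subseteq X$, $\{U\in\mathscr U:F\not\subseteq U\}$ is finite. $\mathscr N[K(X)]=\{\mathscr N(K):K\in K(X)\}$ with $\mathscr N(K)$ the set of open $U\neq X$ with $K\subseteq U$. For a space $Y$ and $y\in Y$: $\mathscr N_Y(y)$ = open neighbourhoods of $y$; $\mathscr T_Y$ = nonempty open sets; $\mathcal D_Y$ = dense sets; $\mathrm{CD}_Y$ = closed discrete sets; $\Omega_{Y,y}=\{S\subseteq Y:y\in\mathrm{cl}(S)\}$; $\Gamma_{Y,y}$ = sequences converging to $y$ (Two's selections count as being in $\Gamma_{Y,y}$ iff they converge to $y$). Games: in $G_1(\mathcal E,\mathcal C)$, at each inning $n\in\omega$ One plays $E_n\in\mathcal E$ and Two picks $x_n\in E_n$; Two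 wins iff $\{x_n:n\in\omega\}\in\mathcal C$; $\neg\mathcal C$ is the complement of $\mathcal C$. Strategies for One map finite sequences of Two's moves to moves; predetermined strategies depend only on the inning number. Strategies for Two map finite sequences of One's moves to an element of the last one; Markov strategies depend only on One's last move and the inning number. $\mathrm{I}\uparrow G$, $\mathrm{I}\underset{\mathrm{pre}}{\uparrow}G$, $\mathrm{II}\uparrow G$, $\mathrm{II}\underset{\mathrm{mark}}{\uparrow}G$ denote existence of a winning strategy / winning predetermined strategy for One / winning strategy / winning Markov strategy for Two. $G\le_{\mathrm{II}}H$ means: $\mathrm{II}\underset{\mathrm{mark}}{\uparrow}G\Rightarrow\mathrm{II}\underset{\mathrm{mark}}{\uparrow}H$, $\mathrm{II}\uparrow G\Rightarrow\mathrm{II}\uparrow H$, $\mathrm{I}\not\uparrow G\Rightarrow\mathrm{I}\not\uparrow H$, and $\mathrm{I}\not\underset{\mathrm{pre}}{\uparrow}G\Rightarrow\mathrm{I}\not\underset{\mathrm{pre}}{\uparrow}H$; $G,H$ are equivalent if $G\le_{\mathrm{II}}H$ and $H\le_{\mathrm{II}}G$. $G,H$ are dual if $\mathrm{I}\uparrow G\iff\mathrm{II}\uparrow H$, $\mathrm{I}\uparrow H\iff\mathrm{II}\uparrow G$, $\mathrm{I}\underset{\mathrm{pre}}{\uparrow}G\iff\mathrm{II}\underset{\mathrm{mark}}{\uparrow}H$, and $\mathrm{I}\underset{\mathrm{pre}}{\uparrow}H\iff\mathrm{II}\underset{\mathrm{mark}}{\uparrow}G$. Two games are equivalent for player One if One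 has a winning strategy in one iff in the other, and a winning predetermined strategy in one iff in the other; equivalent for player Two if Two has a winning strategy in one iff in the other, and a winning Markov strategy in one iff in the other. $\mathrm{cof}(\mathcal E;\mathcal F,\le)$ is the least cardinal $\kappa$ such that some $\{E_\alpha:\alpha<\kappa\}\subseteq\mathcal E$ has every $F\in\mathcal F$ satisfying $F\le E_\alpha$ for some $\alpha$; here $\le$ is $\supseteq$ on sets of functions. *)

(* Defs.v *)
From HB Require Import structures.
From mathcomp Require Import all_boot all_order all_algebra.
From mathcomp Require Import all_classical all_reals all_analysis.
Set Implicit Arguments. Unset Strict Implicit. Unset Printing Implicit Defensive.
Import Order.TTheory GRing.Theory Num.Theory.
Import numFieldNormedType.Exports.
Local Open Scope classical_set_scope.
Local Open Scope ring_scope.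

(* A single-selection game: One plays members of [gmoves], Two picks a
   point of the played set; Two wins a play (x_n)_n iff [gwin x]. *)
Record game := Game {
  gpt : Type;
  gmoves : set (set gpt);
  gwin : (nat -> gpt) -> Prop }.
Arguments gmoves : clear implicits.
Arguments gwin : clear implicits.

Definition G1 (T : Type) (E : set (set T)) (C : set (set T)) : game :=
  @Game T E (fun x => C (range x)).
Definition G1neg (T : Type) (E : set (set T)) (C : set (set T)) : game :=
  @Game T E (fun x => ~ C (range x)).
(* G_1(E, C) when the winning condition is a condition on the sequence of
   selections (used for Gamma_{Y,y}: sequences converging to y). *)
Definition G1seq (T : Type) (E : set (set T)) (W : (nat -> T) -> Prop) : game :=
  @Game T E W.

Definition I_wins (G : game) : Prop :=
  exists sigma : seq (gpt G) -> set (gpt G),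
    (forall s, gmoves G (sigma s)) /\
    forall x : nat -> gpt G,
      (forall n, sigma (mkseq x n) (x n)) -> ~ gwin G x.

(* One wins with a predetermined strategy (depends only on the inning). *)
Definition I_wins_pre (G : game) : Prop :=
  exists e : nat -> set (gpt G),
    (forall n, gmoves G (e n)) /\
    forall x : nat -> gpt G, (forall n, e n (x n)) -> ~ gwin G x.

Definition II_wins (G : game) : Prop :=
  exists tau : seq (set (gpt G)) -> gpt G,
    (forall s E, gmoves G E -> E (tau (rcons s E))) /\
    forall e : nat -> set (gpt G), (forall n, gmoves G (e n)) ->
      gwin G (fun n => tau (mkseq e n.+1)).

(* Two wins with a Markov strategy (depends on One's last move and the
   inning number). *)
Definition II_wins_mark (G : game) : Prop :=
  exists tau : set (gpt G) -> nat -> gpt G,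
    (forall E n, gmoves G E -> E (tau E n)) /\
    forall e : nat -> set (gpt G), (forall n, gmoves G (e n)) ->
      gwin G (fun n => tau (e n) n).

Definition le_II (G H : game) : Prop :=
  [/\ II_wins_mark G -> II_wins_mark H,
      II_wins G -> II_wins H,
      ~ I_wins G -> ~ I_wins H &
      ~ I_wins_pre G -> ~ I_wins_pre H].

Definition games_equiv (G H : game) : Prop := le_II G H /\ le_II H G.

Definition games_dual (G H : game) : Prop :=
  [/\ I_wins G <-> II_wins H,
      I_wins H <-> II_wins G,
      I_wins_pre G <-> II_wins_mark H &
      I_wins_pre H <-> II_wins_mark G].

Definition equiv_for_One (G H : game) : Prop :=
  (I_wins G <-> I_wins H) /\ (I_wins_pre G <-> I_wins_pre H).

Definition equiv_for_Two (G H : game) : Prop :=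
  (II_wins G <-> II_wins H) /\ (II_wins_mark G <-> II_wins_mark H).

Section OpenSpace.
Variables (T : Type) (op : set (set T)).

Definition nbhd_open (y : T) : set (set T) := [set U | op U /\ U y].
Definition nonempty_open : set (set T) := [set U | op U /\ U !=set0].
Definition clos (S : set T) (y : T) : Prop :=
  forall U, op U -> U y -> U `&` S !=set0.
Definition dense_sets : set (set T) := [set S | forall y, clos S y].
Definition closed_discrete : set (set T) :=
  [set S | (forall y, clos S y -> S y) /\
           (forall y, S y -> exists U, op U /\ U `&` S = [set y])].
Definition Omega_pt (y : T) : set (set T) := [set S | clos S y].
Definition converges_to (s : nat -> T) (y : T) : Prop :=
  forall U, op U -> U y -> exists N, forall n, (N <= n)%N -> U (s n).
End OpenSpace.

Section Covers.
Variable X : topologicalType.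

Definition open_cover (U : set (set X)) : Prop :=
  (forall V, U V -> open V) /\ (forall x, exists2 V, U V & V x).

Definition omega_cover (U : set (set X)) : Prop :=
  [/\ open_cover U, ~ U setT &
      forall F : set X, finite_set F -> exists2 V, U V & F `<=` V].

Definition k_cover (U : set (set X)) : Prop :=
  [/\ open_cover U, ~ U setT &
      forall K : set X, compact K -> exists2 V, U V & K `<=` V].

Definition gamma_cover (U : set (set X)) : Prop :=
  [/\ ~ finite_set U, open_cover U, ~ U setT &
      forall F : set X, finite_set F ->
        finite_set [set V | U V /\ ~ (F `<=` V)]].

Definition nbhds_of_set (K : set X) : set (set X) :=
  [set U | open U /\ U <> setT /\ K `<=` U].

Definition N_KX : set (set (set X)) :=
  [set nbhds_of_set K | K in [set K | compact K /\ K !=set0]].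

Definition sigma_compact : Prop :=
  exists K : nat -> set X, (forall n, compact (K n)) /\
    \bigcup_n K n = setT.
End Covers.

(* Tychonoff = T1 + completely regular (functions into [0,1]) *)
Definition tychonoff_space (R : realType) (X : topologicalType) : Prop :=
  accessible_space X /\
  forall (x : X) (B : set X), closed B -> ~ B x ->
    exists f : X -> R, [/\ continuous f, forall y, 0 <= f y <= 1,
                           f x = 0 & forall y, B y -> f y = 1].

Section Cfun.
Variables (R : realType) (X : topologicalType).

Definition CX := {f : X -> R | continuous f}.

Definition CX0 : CX := exist _ (fun=> 0) (@cst_continuous X R 0).

Definition basic_nbhd (f : CX) (A : set X) (eps : R) : set CX :=
  [set g | forall x, A x -> `|proj1_sig f x - proj1_sig g x| < eps].

Definition gen_open (adm : set (set X)) : set (set CX) :=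
  [set U | forall f, U f -> exists A, adm A /\
     exists2 eps : R, 0 < eps & basic_nbhd f A eps `<=` U].

Definition Cp_open : set (set CX) := gen_open (@finite_set X).
Definition Ck_open : set (set CX) := gen_open (@compact X).

Definition cofinal_fam (I : Type) (e : I -> set CX) (E F : set (set CX)) :=
  (forall i, E (e i)) /\ (forall V, F V -> exists i, e i `<=` V).
Definition cof_eq_omega (E F : set (set CX)) : Prop :=
  (exists e : nat -> set CX, cofinal_fam e E F) /\
  (forall (n : nat) (e : 'I_n -> set CX), ~ cofinal_fam e E F).
End Cfun.
Arguments CX0 : clear implicits.
Arguments Cp_open : clear implicits.
Arguments Ck_open : clear implicits.

Section Games.
Variables (R : realType) (X : topologicalType).
Local Notation C := (CX R X).
Local Notation zero := (CX0 R X).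

Definition G_NK_notOmega : game := G1neg (@N_KX X) (@omega_cover X).
Definition G_Nk0_notOmegap : game :=
  G1neg (nbhd_open (Ck_open R X) zero) (Omega_pt (Cp_open R X) zero).
Definition G_Tk_CDp : game :=
  G1 (nonempty_open (Ck_open R X)) (closed_discrete (Cp_open R X)).
Definition G_K_Omega : game := G1 (@k_cover X) (@omega_cover X).
Definition G_Omegak0_Omegap : game :=
  G1 (Omega_pt (Ck_open R X) zero) (Omega_pt (Cp_open R X) zero).
Definition G_Dk_Omegap : game :=
  G1 (dense_sets (Ck_open R X)) (Omega_pt (Cp_open R X) zero).
Definition G_NK_notGamma : game := G1neg (@N_KX X) (@gamma_cover X).
Definition G_Nk0_notGammap : game :=
  G1seq (nbhd_open (Ck_open R X) zero)
        (fun s => ~ converges_to (Cp_open R X) s zero).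
Definition G_K_Gamma : game := G1 (@k_cover X) (@gamma_cover X).
End Games.
Arguments G_NK_notOmega : clear implicits.
Arguments G_K_Omega : clear implicits.
Arguments G_NK_notGamma : clear implicits.
Arguments G_K_Gamma : clear implicits.
Arguments G_Nk0_notOmegap : clear implicits.
Arguments G_Tk_CDp : clear implicits.
Arguments G_Omegak0_Omegap : clear implicits.
Arguments G_Dk_Omegap : clear implicits.
Arguments G_Nk0_notGammap : clear implicits.

(* Main.v *)
Require Import Defs.
From mathcomp Require Import all_boot all_order all_algebra.
From mathcomp Require Import all_classical all_reals all_analysis.
From HB Require Import structures.
From mathcomp Require Import finmap.
From mathcomp.algebra_tactics Require Import ring lra.

Module Helpers.

Set Implicit Arguments. Unset Strict Implicit. Unset Printing Implicit Defensive.
Local Open Scope classical_set_scope.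

Definition eps {T : Type} (d : T) (P : T -> Prop) : T :=
  match pselect (exists x, P x) with
  | left h => proj1_sig (cid h) | right _ => d end.

Lemma epsP {T : Type} (d : T) (P : T -> Prop) : (exists x, P x) -> P (eps d P).
Proof.
move=> h; rewrite /eps; case: pselect => [h'|//].
exact: (proj2_sig (cid h')).
Qed.

Lemma take_mkseq {T} (f : nat -> T) k n : (k <= n)%N -> take k (mkseq f n) = mkseq f k.
Proof. by move=> hk; rewrite /mkseq -map_take take_iota (minn_idPl hk). Qed.

Lemma mkseq_ext {T} (f g : nat -> T) n : (forall i, (i < n)%N -> f i = g i) ->
  mkseq f n = mkseq g n.
Proof.
move=> h; rewrite /mkseq; apply/eq_in_map => i; rewrite mem_iota add0n => /andP[_ hi].
exact: h.
Qed.

Lemma Ipre_I G : I_wins_pre G -> I_wins G.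
Proof.
move=> [e [he hw]]; exists (fun s => e (size s)); split => // x hx.
apply: hw => n; move: (hx n); by rewrite size_mkseq.
Qed.

Lemma IImark_II G : II_wins_mark G -> II_wins G.
Proof.
move=> [t [ht hw]]; exists (fun s => t (last set0 s) (size s).-1); split.
  by move=> s E hE; rewrite last_rcons; apply: ht.
move=> e he.
have -> : (fun n => t (last set0 (mkseq e n.+1)) (size (mkseq e n.+1)).-1)
   = (fun n => t (e n) n).
  by apply: funext => n; rewrite mkseqS last_rcons size_rcons size_mkseq.
exact: hw.
Qed.

Lemma I_II_excl G : I_wins G -> II_wins G -> False.
Proof.
move=> [sg [hs ws]] [tau [ht wt]].
pose ones (h : seq (gpt G)) := [seq sg (take k h) | k <- iota 0 (size h).+1].
pose fix hist n := if n is m.+1 then rcons (hist m) (tau (ones (hist m))) else [::].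
pose x n := tau (ones (hist n)).
have hx : forall n, hist n = mkseq x n.
  elim=> [//|n IH] /=; by rewrite mkseqS -IH.
pose e n := sg (mkseq x n).
have he : forall n, ones (mkseq x n) = mkseq e n.+1.
  move=> n; rewrite /ones size_mkseq /e /mkseq; apply/eq_in_map => k.
  rewrite mem_iota add0n => /andP[_ hk].
  by rewrite -/(mkseq x n) take_mkseq.
have hxe : forall n, x n = tau (mkseq e n.+1).
  by move=> n; rewrite /x hx he.
apply: (ws x).
  by move=> n; rewrite hxe mkseqS; apply: ht; apply: hs.
have -> : x = (fun n => tau (mkseq e n.+1)) by apply: funext => n; apply: hxe.
apply: wt => n; exact: hs.
Qed.

Lemma Ipre_II_excl G : I_wins_pre G -> II_wins G -> False.
Proof. by move=> /Ipre_I; apply: I_II_excl. Qed.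

Section Transl.
Variables (G H : game).
Variables (back : nat -> set (gpt H) -> set (gpt G))
          (fwd : nat -> gpt G -> set (gpt H) -> gpt H).
Hypothesis hback : forall n E, gmoves H E -> gmoves G (back n E).
Hypothesis hfwd : forall n E p, gmoves H E -> back n E p -> E (fwd n p E).
Hypothesis hwin : forall (E : nat -> set (gpt H)) (p : nat -> gpt G),
  (forall n, gmoves H (E n)) -> (forall n, back n (E n) (p n)) ->
  gwin G p -> gwin H (fun n => fwd n (p n) (E n)).

Lemma transl : le_II G H.
Proof.
split.
- move=> [t [ht hw]].
  exists (fun E n => fwd n (t (back n E) n) E); split.
    by move=> E n hE; apply: hfwd => //; apply: ht; apply: hback.
  move=> e he; apply: (hwin he (p := fun n => t (back n (e n)) n)).
    by move=> n; apply: ht; apply: hback.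
  apply: (hw (fun n => back n (e n))) => n; exact: hback.
- move=> [t [ht hw]].
  pose bk (s : seq (set (gpt H))) := [seq back i (nth set0 s i) | i <- iota 0 (size s)].
  have bkr : forall s E, bk (rcons s E) = rcons (bk s) (back (size s) E).
    move=> s E; rewrite /bk size_rcons -addn1 iotaD map_cat add0n /= cats1.
    congr rcons; last by rewrite nth_rcons ltnn eqxx.
    apply/eq_in_map => i; rewrite mem_iota add0n => /andP[_ hi].
    by rewrite nth_rcons hi.
  exists (fun s => fwd (size s).-1 (t (bk s)) (last set0 s)); split.
    move=> s E hE; rewrite size_rcons last_rcons bkr /=.
    apply: hfwd => //; apply: ht; exact: hback.
  move=> e he.
  pose e' i := back i (e i).
  have hbk : forall n, bk (mkseq e n) = mkseq e' n.
    move=> n; rewrite /bk size_mkseq /mkseq; apply/eq_in_map => i.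
    by rewrite mem_iota add0n => /andP[_ hi]; rewrite -/(mkseq e n) nth_mkseq.
  have -> : (fun n => fwd (size (mkseq e n.+1)).-1 (t (bk (mkseq e n.+1)))
                          (last set0 (mkseq e n.+1)))
        = (fun n => fwd n (t (mkseq e' n.+1)) (e n)).
    by apply: funext => n; rewrite size_mkseq hbk [mkseq e _]mkseqS last_rcons.
  apply: hwin => //.
    move=> n; rewrite mkseqS; apply: ht; exact: hback.
  apply: hw => n; exact: hback.
- move=> nIG [sH [hsH wsH]]; apply: nIG.
  pose ys (h : seq (gpt G)) := foldl (fun acc p => rcons acc (fwd (size acc) p (sH acc))) [::] h.
  have ysr : forall h p, ys (rcons h p) = rcons (ys h) (fwd (size (ys h)) p (sH (ys h))).
    by move=> h p; rewrite /ys foldl_rcons.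
  have ysz : forall h, size (ys h) = size h.
    by elim/last_ind => [//|h p IH]; rewrite ysr !size_rcons IH.
  exists (fun h => back (size h) (sH (ys h))); split.
    by move=> s; apply: hback.
  move=> x hx.
  pose E n := sH (ys (mkseq x n)).
  pose y n := fwd n (x n) (E n).
  have hy : forall n, ys (mkseq x n) = mkseq y n.
    elim=> [//|n IH]; by rewrite mkseqS ysr ysz size_mkseq mkseqS -IH.
  move=> gx.
  have := hwin (E := E) (p := x) (fun n => hsH _) _ gx.
  have hxb : forall n, back n (E n) (x n).
    by move=> n; move: (hx n); rewrite size_mkseq.
  move=> /(_ hxb); apply: wsH => n.
  rewrite -hy; apply: hfwd; [exact: hsH | exact: hxb].
- move=> nIG [eH [heH weH]]; apply: nIG.
  exists (fun n => back n (eH n)); split; first by move=> n; exact: hback.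
  move=> x hx gx; have := hwin heH hx gx; apply: weH => n.
  apply: hfwd => //.
Qed.
End Transl.

Lemma le_II_refl G : le_II G G.
Proof. by split. Qed.

Lemma le_II_trans G H K : le_II G H -> le_II H K -> le_II G K.
Proof.
move=> [a b c d] [a' b' c' d']; split; auto.
Qed.

Lemma games_equiv_sym G H : games_equiv G H -> games_equiv H G.
Proof. by move=> [] ? ?; split. Qed.

Lemma games_equiv_trans G H K : games_equiv G H -> games_equiv H K -> games_equiv G K.
Proof. move=> [a b] [c d]; split; apply: le_II_trans; eauto. Qed.

Lemma games_equiv_refl G : games_equiv G G.
Proof. split; exact: le_II_refl. Qed.

Lemma nn_iff (P Q : Prop) : (~ P -> ~ Q) -> (~ Q -> ~ P) -> (P <-> Q).
Proof.
move=> h1 h2; split=> p.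
  by apply: contrapT => nq; exact: (h2 nq p).
by apply: contrapT => np; exact: (h1 np p).
Qed.

Lemma equiv_props G H : games_equiv G H ->
  [/\ I_wins G <-> I_wins H, I_wins_pre G <-> I_wins_pre H,
      II_wins G <-> II_wins H & II_wins_mark G <-> II_wins_mark H].
Proof.
move=> [[a b c d] [a' b' c' d']]; split.
- exact: nn_iff.
- exact: nn_iff.
- by split.
- by split.
Qed.

Lemma props_equiv G H :
  (I_wins G <-> I_wins H) -> (I_wins_pre G <-> I_wins_pre H) ->
  (II_wins G <-> II_wins H) -> (II_wins_mark G <-> II_wins_mark H) ->
  games_equiv G H.
Proof.
move=> [a a'] [b b'] [c c'] [d d']; split; split; auto;
  by move=> h /[dup] ? ; [move/a'|move/b'|move/a|move/b].
Qed.

Lemma dual_transport G H G' H' : games_dual G H -> games_equiv G G' ->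
  games_equiv H H' -> games_dual G' H'.
Proof.
move=> [a b c d] /equiv_props [g1 g2 g3 g4] /equiv_props [h1 h2 h3 h4].
split.
- by rewrite -g1 -h3.
- by rewrite -h1 -g3.
- by rewrite -g2 -h4.
- by rewrite -h2 -g4.
Qed.

Lemma equiv_of_Ipre G H : I_wins_pre G -> I_wins_pre H -> games_equiv G H.
Proof.
move=> pG pH; apply: props_equiv.
- by split=> _; apply: Ipre_I.
- by [].
- by split=> /(Ipre_II_excl _); [move/(_ pG)|move/(_ pH)].
- by split=> /IImark_II /(Ipre_II_excl _); [move/(_ pG)|move/(_ pH)].
Qed.

Lemma IImark_notI G : II_wins_mark G -> ~ I_wins G.
Proof. by move=> /IImark_II h /I_II_excl; apply. Qed.

Lemma equiv_of_IImark G H : II_wins_mark G -> II_wins_mark H -> games_equiv G H.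
Proof.
move=> pG pH; apply: props_equiv.
- by split=> /(IImark_notI _); [move/(_ pG)|move/(_ pH)].
- by split=> /Ipre_I /(IImark_notI _); [move/(_ pG)|move/(_ pH)].
- by split=> _; apply: IImark_II.
- by [].
Qed.

Section AbsDual.
Variables (P : Type) (p0 : P).

Lemma LI2 (M1 M2 : set (set P)) (W1 W2 : (nat -> P) -> Prop) :
  (forall E F, M1 E -> M2 F -> exists p, E p /\ F p) ->
  (forall x, ~ W1 x -> W2 x) ->
  (I_wins (Game M1 W1) -> II_wins (Game M2 W2)) /\
  (I_wins_pre (Game M1 W1) -> II_wins_mark (Game M2 W2)).
Proof.
move=> hm hw; split.
- move=> [sg [hs ws]] /=.
  pose pick h F := eps p0 (fun p => sg h p /\ F p).
  have pickP : forall h F, M2 F -> sg h (pick h F) /\ F (pick h F).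
    by move=> h F hF; exact: (@epsP _ p0 (fun p => sg h p /\ F p) (hm _ _ (hs h) hF)).
  pose picks s := foldl (fun acc F => rcons acc (pick acc F)) [::] s.
  have picksr : forall s F, picks (rcons s F) = rcons (picks s) (pick (picks s) F).
    by move=> s F; rewrite /picks foldl_rcons.
  exists (fun s => last p0 (picks s)); split.
    by move=> s E hE /=; rewrite picksr last_rcons; case: (pickP (picks s) E hE).
  move=> e he /=.
  pose x n := last p0 (picks (mkseq e n.+1)).
  have hx : forall n, picks (mkseq e n) = mkseq x n.
    elim=> [//|n IH]; rewrite mkseqS picksr [RHS]mkseqS IH; congr rcons.
    by rewrite /x mkseqS picksr last_rcons IH.
  apply: hw; apply: ws => n.
  rewrite /x mkseqS picksr last_rcons hx; by case: (pickP (mkseq x n) (e n) (he n)).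
- move=> [e [he we]] /=.
  pose t F n := eps p0 (fun p => e n p /\ F p).
  have tP : forall F n, M2 F -> e n (t F n) /\ F (t F n).
    by move=> F n hF; exact: (@epsP _ p0 (fun p => e n p /\ F p) (hm _ _ (he n) hF)).
  exists t; split; first by move=> F n hF; case: (tP F n hF).
  move=> e' he'; apply: hw; apply: we => n; by case: (tP _ n (he' n)).
Qed.

Lemma LII_I (M1 M2 : set (set P)) (W1 W2 : (nat -> P) -> Prop) :
  (forall T : set P -> P, (forall F, M2 F -> F (T F)) ->
     exists E, M1 E /\ E `<=` [set T F | F in M2]) ->
  (forall x, W2 x -> ~ W1 x) ->
  (II_wins (Game M2 W2) -> I_wins (Game M1 W1)) /\
  (II_wins_mark (Game M2 W2) -> I_wins_pre (Game M1 W1)).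
Proof.
move=> hr hw; split.
- move=> [tau [ht wt]] /=.
  pose Es s := eps set0 (fun E => M1 E /\ E `<=` [set tau (rcons s F) | F in M2]).
  have EsP : forall s, M1 (Es s) /\ Es s `<=` [set tau (rcons s F) | F in M2].
    move=> s; apply: (@epsP _ set0 (fun E => M1 E /\ E `<=` [set tau (rcons s F) | F in M2])).
    by apply: (hr (fun F => tau (rcons s F))) => F hF; apply: ht.
  pose rsel s p := eps set0 (fun F => M2 F /\ tau (rcons s F) = p).
  pose ks h := foldl (fun acc p => rcons acc (rsel acc p)) [::] h.
  have ksr : forall h p, ks (rcons h p) = rcons (ks h) (rsel (ks h) p).
    by move=> h p; rewrite /ks foldl_rcons.
  exists (fun h => Es (ks h)); split; first by move=> s; case: (EsP (ks s)).
  move=> x hx /=.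
  pose e n := rsel (ks (mkseq x n)) (x n).
  have he : forall n, ks (mkseq x n) = mkseq e n.
    elim=> [//|n IH]; by rewrite mkseqS ksr [RHS]mkseqS -IH.
  have hr' : forall n, M2 (e n) /\ tau (rcons (mkseq e n) (e n)) = x n.
    move=> n; rewrite /e he; apply: (@epsP _ set0 (fun F => M2 F /\ tau (rcons (mkseq e n) F) = x n)).
    case: (EsP (mkseq e n)) => _ /(_ (x n)); rewrite -he => /(_ (hx n)).
    by move=> [F hF <-]; exists F.
  apply: hw.
  have -> : x = (fun n => tau (mkseq e n.+1)).
    by apply: funext => n; rewrite mkseqS; case: (hr' n).
  by apply: wt => n; case: (hr' n).
- move=> [tau [ht wt]] /=.
  pose Es n := eps set0 (fun E => M1 E /\ E `<=` [set tau F n | F in M2]).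
  have EsP : forall n, M1 (Es n) /\ Es n `<=` [set tau F n | F in M2].
    move=> n; apply: (@epsP _ set0 (fun E => M1 E /\ E `<=` [set tau F n | F in M2])).
    by apply: (hr (fun F => tau F n)) => F hF; apply: ht.
  exists Es; split; first by move=> n; case: (EsP n).
  move=> x hx.
  pose e n := eps set0 (fun F => M2 F /\ tau F n = x n).
  have he : forall n, M2 (e n) /\ tau (e n) n = x n.
    move=> n; apply: (@epsP _ set0 (fun F => M2 F /\ tau F n = x n)); case: (EsP n) => _ /(_ (x n) (hx n)) [F hF <-].
    by exists F.
  apply: hw.
  have -> : x = (fun n => tau (e n) n) by apply: funext => n; case: (he n).
  by apply: wt => n; case: (he n).
Qed.

Lemma refl_of_img (M1 M2 : set (set P)) :
  (forall f : set P -> P, (forall F, M2 F -> F (f F)) -> M1 [set f F | F in M2]) ->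
  forall T : set P -> P, (forall F, M2 F -> F (T F)) ->
     exists E, M1 E /\ E `<=` [set T F | F in M2].
Proof. by move=> h T hT; exists [set T F | F in M2]; split => //; apply: h. Qed.

Lemma refl_of_h2 (M1 M2 : set (set P)) :
  (forall f : set P -> P, (forall E, M1 E -> E (f E)) -> M2 [set f E | E in M1]) ->
  forall T : set P -> P, (forall F, M2 F -> F (T F)) ->
     exists E, M1 E /\ E `<=` [set T F | F in M2].
Proof.
move=> h T hT; apply: contrapT => hn.
have hn' : forall E, M1 E -> exists p, E p /\ ~ [set T F | F in M2] p.
  move=> E hE; apply: contrapT => hne; apply: hn; exists E; split => // p hp.
  by apply: contrapT => hp'; apply: hne; exists p.
pose f E := eps p0 (fun p => E p /\ ~ [set T F | F in M2] p).
have fP : forall E, M1 E -> E (f E) /\ ~ [set T F | F in M2] (f E).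
  by move=> E hE; exact: (@epsP _ p0 (fun p => E p /\ ~ [set T F | F in M2] p) (hn' E hE)).
have hA := h f (fun E hE => proj1 (fP E hE)).
have := hT _ hA; move=> [E hE hEq].
case: (fP E hE) => _; apply; rewrite hEq; by exists [set f E | E in M1].
Qed.

Theorem dual_abs (Rf Af : set (set P)) (W : set (set P)) :
  (forall A R, Af A -> Rf R -> exists p, A p /\ R p) ->
  (forall f : set P -> P, (forall R, Rf R -> R (f R)) -> Af [set f R | R in Rf]) ->
  games_dual (G1neg Rf W) (G1 Af W).
Proof.
move=> h1 h2.
have h1' : forall E F, Rf E -> Af F -> exists p, E p /\ F p.
  by move=> E F hE hF; case: (h1 F E hF hE) => p [? ?]; exists p.
have [a1 a2] := @LI2 Rf Af (fun x => ~ W (range x)) (fun x => W (range x)) h1'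
  (fun x h => contrapT h).
have [b1 b2] := @LII_I Rf Af (fun x => ~ W (range x)) (fun x => W (range x))
  (refl_of_h2 h2) (fun x h hn => hn h).
have [c1 c2] := @LI2 Af Rf (fun x => W (range x)) (fun x => ~ W (range x)) h1
  (fun x h => h).
have [d1 d2] := @LII_I Af Rf (fun x => W (range x)) (fun x => ~ W (range x))
  (refl_of_img h2) (fun x h hn => h hn).
by split; split.
Qed.
End AbsDual.

Inductive subh {P : Type} : seq P -> seq P -> Prop :=
| subh_nil : subh [::] [::]
| subh_skip t h a : subh t h -> subh t (rcons h a)
| subh_take t h a : subh t h -> subh (rcons t a) (rcons h a).

Lemma subh_nilL {P : Type} (h : seq P) : subh [::] h.
Proof. elim/last_ind: h => [|h a IH]; [exact: subh_nil | exact: subh_skip]. Qed.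

Lemma subh_nilR {P : Type} (t : seq P) : subh t [::] -> t = [::].
Proof.
have : forall h', subh t h' -> h' = [::] -> t = [::].
  move=> h' []; first by [].
  - by move=> ? h0 a0 _; case: h0.
  - by move=> ? h0 a0 _; case: h0.
by move=> H /H; apply.
Qed.

Lemma subh_rconsR {P : Type} (t h : seq P) a : subh t (rcons h a) ->
  subh t h \/ exists2 t', t = rcons t' a & subh t' h.
Proof.
have : forall h', subh t h' -> h' = rcons h a ->
  subh t h \/ exists2 t', t = rcons t' a & subh t' h.
  move=> h' [].
  - by case: (h).
  - by move=> t0 h0 a0 hs /rcons_inj [e _]; rewrite -e; left.
  - by move=> t0 h0 a0 hs /rcons_inj [e1 e2]; right; exists t0; rewrite -?e1 -?e2.
by move=> H /H; apply.
Qed.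

Section Subseq.
Variables (P : Type) (M : set (set P)).
Hypothesis hbin : forall E1 E2, M E1 -> M E2 -> exists2 E, M E & E `<=` E1 `&` E2.

Lemma refine_sub (F : seq P -> set P) : (forall t, M (F t)) ->
  forall h, exists2 E, M E & forall t, subh t h -> E `<=` F t.
Proof.
move=> hF h; elim/last_ind: h F hF => [|h a IH] F hF.
  by exists (F [::]) => // t /subh_nilR ->.
have [E1 hE1 s1] := IH F hF.
have [E2 hE2 s2] := IH (fun t => F (rcons t a)) (fun t => hF _).
have [E hE sE] := hbin hE1 hE2.
exists E => // t ht0; case: (subh_rconsR ht0) => [ht|[t' -> ht]].
  by move=> p /sE [hp1 _]; exact: s1 ht p hp1.
by move=> p /sE [_ hp2]; exact: s2 t' ht p hp2.
Qed.

Lemma subh_mkseq (x : nat -> P) (phi : nat -> nat) :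
  (forall i, (phi i < phi i.+1)%N) ->
  forall i, subh (mkseq (fun j => x (phi j)) i) (mkseq x (phi i)).
Proof.
move=> hphi; elim=> [|i IH]; first exact: subh_nilL.
have step : forall k, (phi i < k)%N -> subh (mkseq (fun j => x (phi j)) i.+1) (mkseq x k).
  elim=> [//|k IHk]; rewrite ltnS leq_eqVlt => /orP[/eqP <-|hk].
    rewrite !mkseqS; exact: subh_take.
  rewrite [mkseq x k.+1]mkseqS; apply: subh_skip; exact: IHk.
exact: step.
Qed.

Lemma phi_ge (phi : nat -> nat) : (forall i, (phi i < phi i.+1)%N) -> forall i, (i <= phi i)%N.
Proof. move=> h; elim=> [//|i IH]; exact: leq_ltn_trans IH (h i). Qed.

Lemma subseq_One (W W' : (nat -> P) -> Prop) :
  (forall x, (forall n, exists2 E, M E & E (x n)) -> W' x ->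
     exists phi : nat -> nat, (forall i, (phi i < phi i.+1)%N) /\ W (fun i => x (phi i))) ->
  (I_wins (Game M W) -> I_wins (Game M W')) /\
  (I_wins_pre (Game M W) -> I_wins_pre (Game M W')).
Proof.
move=> hsub; split.
- move=> [sg [hs ws]] /=.
  pose sg' h := eps set0 (fun E => M E /\ forall t, subh t h -> E `<=` sg t).
  have sgP : forall h, M (sg' h) /\ forall t, subh t h -> sg' h `<=` sg t.
    move=> h; apply: (@epsP _ set0 (fun E => M E /\ forall t, subh t h -> E `<=` sg t)).
    have [E ? ?] := refine_sub hs h; by exists E.
  exists sg'; split; first by move=> s; case: (sgP s).
  move=> x hx hW'.
  have [phi [hphi hW]] := hsub x (fun n => @ex_intro2 (set P) M (fun E => E (x n)) (sg' (mkseq x n)) (proj1 (sgP _)) (hx n)) hW'.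
  apply: (ws (fun i => x (phi i))) => // i.
  case: (sgP (mkseq x (phi i))) => _ /(_ _ (subh_mkseq x hphi i)); apply; exact: hx.
- move=> [e [he we]] /=.
  have ex : forall n, exists E, M E /\ forall k, (k <= n)%N -> E `<=` e k.
    elim=> [|n [E [hE sE]]].
      by exists (e 0%N); split; [exact: he|] => k; rewrite leqn0 => /eqP ->.
    have [E' hE' sE'] := hbin hE (he n.+1).
    exists E'; split => // k; rewrite leq_eqVlt => /orP[/eqP ->|hk].
      by move=> p /sE' [].
    by move=> p /sE' [hp _]; exact: sE k hk p hp.
  pose e' n := eps set0 (fun E => M E /\ forall k, (k <= n)%N -> E `<=` e k).
  have eP : forall n, M (e' n) /\ forall k, (k <= n)%N -> e' n `<=` e k.
    by move=> n; apply: (@epsP _ set0 (fun E => M E /\ forall k, (k <= n)%N -> E `<=` e k)).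
  exists e'; split; first by move=> n; case: (eP n).
  move=> x hx hW'.
  have [phi [hphi hW]] := hsub x (fun n => @ex_intro2 (set P) M (fun E => E (x n)) (e' n) (proj1 (eP n)) (hx n)) hW'.
  apply: (we (fun i => x (phi i))) => // i.
  by case: (eP (phi i)) => _ /(_ i (phi_ge hphi i)); apply.
Qed.
End Subseq.

Lemma win_mono (P : Type) (M : set (set P)) (W W' : (nat -> P) -> Prop) :
  (forall x, W x -> W' x) ->
  (I_wins (Game M W') -> I_wins (Game M W)) /\
  (I_wins_pre (Game M W') -> I_wins_pre (Game M W)) /\
  (II_wins (Game M W) -> II_wins (Game M W')) /\
  (II_wins_mark (Game M W) -> II_wins_mark (Game M W')).
Proof.
move=> h; split; [|split; [|split]].
- move=> [s [hs ws]]; exists s; split => // x hx /h; exact: ws.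
- move=> [s [hs ws]]; exists s; split => // x hx /h; exact: ws.
- move=> [s [hs ws]]; exists s; split => // x hx; apply: h; exact: ws.
- move=> [s [hs ws]]; exists s; split => // x hx; apply: h; exact: ws.
Qed.

Set Implicit Arguments. Unset Strict Implicit. Unset Printing Implicit Defensive.
Import Order.TTheory GRing.Theory Num.Theory.
Import numFieldNormedType.Exports.
Local Open Scope classical_set_scope.
Local Open Scope ring_scope.

Section PointedCopy.
Variables (T : topologicalType) (t : T).
Definition pT : Type := T.
HB.instance Definition _ := Topological.on pT.
HB.instance Definition _ := isPointed.Build pT t.
Lemma compact_cover_gen (A : set T) : compact A -> cover_compact A.
Proof.
move=> hA; have e := compact_cover pT; have : @compact pT A by [].
by rewrite e; exact.
Qed.
End PointedCopy.

Section Top.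
Variables (R : realType) (X : topologicalType).
Local Notation C := (CX R X).
Local Notation "f ^^" := (proj1_sig f) (at level 2, format "f ^^").

Lemma c_add (f g : X -> R) : continuous f -> continuous g -> continuous (fun x => f x + g x).
Proof. by move=> hf hg x; apply: continuousD; [exact: hf|exact: hg]. Qed.
Lemma c_mul (f g : X -> R) : continuous f -> continuous g -> continuous (fun x => f x * g x).
Proof. by move=> hf hg x; apply: continuousM; [exact: hf|exact: hg]. Qed.
Lemma c_opp (f : X -> R) : continuous f -> continuous (fun x => - f x).
Proof. by move=> hf x; apply: continuousN; exact: hf. Qed.
Lemma c_cst (c : R) : continuous (fun _ : X => c).
Proof. exact: cst_continuous. Qed.
Lemma c_abs (f : X -> R) : continuous f -> continuous (fun x => `|f x|).
Proof.
move=> hf x; apply: (continuous_comp (hf x)); exact: norm_continuous.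
Qed.
Lemma c_min (f g : X -> R) : continuous f -> continuous g -> continuous (fun x => Num.min (f x) (g x)).
Proof. move=> hf hg; exact: (min_fun_continuous hf hg). Qed.
Lemma c_max (f g : X -> R) : continuous f -> continuous g -> continuous (fun x => Num.max (f x) (g x)).
Proof. move=> hf hg; exact: (max_fun_continuous hf hg). Qed.

Lemma open_lt_fun (f : X -> R) (d : R) : continuous f -> open [set x | f x < d].
Proof. by move=> hf; move/continuousP: hf => /(_ _ (@open_lt _ d)). Qed.

Lemma C_ext (f g : C) : (forall x, f^^ x = g^^ x) -> f = g.
Proof.
case: f => f hf; case: g => g hg /= h.
have e : f = g by apply: funext.
subst g; congr exist; exact: Prop_irrelevance.
Qed.

Lemma basic_center (f : C) A (e : R) : 0 < e -> basic_nbhd f A e f.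
Proof. by move=> he x _; rewrite subrr normr0. Qed.

Lemma basic_trans (f g : C) A (e d : R) : basic_nbhd f A e g ->
  basic_nbhd g A d `<=` basic_nbhd f A (e + d).
Proof.
move=> hg h hh x hx; rewrite (le_lt_trans (ler_distD (g^^ x) _ _)) //.
by rewrite ltrD //; [exact: hg|exact: hh].
Qed.

Lemma basic_sub (f : C) A B (e d : R) : B `<=` A -> d <= e ->
  basic_nbhd f A d `<=` basic_nbhd f B e.
Proof. by move=> hBA hde g hg x /hBA hx; exact: (lt_le_trans (hg x hx) hde). Qed.

Definition cint (adm : set (set X)) (S : set C) : set C :=
  [set g | exists A, adm A /\ exists2 d : R, 0 < d & basic_nbhd g A d `<=` S].

Lemma intr_open adm S : gen_open adm (cint adm S).
Proof.
move=> g [A [hA [d hd hsub]]]; exists A; split => //; exists (d / 2).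
  by rewrite divr_gt0.
move=> h hh; exists A; split => //; exists (d / 2); first by rewrite divr_gt0.
move=> k hk; apply: hsub.
have := basic_trans hh hk; rewrite -splitr; exact.
Qed.

Lemma intr_sub adm S : cint adm S `<=` S.
Proof. by move=> g [A [_ [d hd hs]]]; apply: hs; apply: basic_center. Qed.

Lemma intr_in adm S (f : C) A (e : R) : adm A -> 0 < e -> basic_nbhd f A e `<=` S ->
  cint adm S f.
Proof. by move=> hA he hs; exists A; split => //; exists e. Qed.

Lemma intr_basic adm (f : C) A (e : R) : adm A -> 0 < e -> cint adm (basic_nbhd f A e) f.
Proof. by move=> hA he; apply: (intr_in hA he). Qed.

Lemma clos_gen adm (S : set C) (f : C) :
  clos (gen_open adm) S f <->
  (forall A, adm A -> forall e : R, 0 < e -> exists g, S g /\ basic_nbhd f A e g).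
Proof.
split.
- move=> hc A hA e he.
  have [g [/intr_sub hg hSg]] := hc _ (@intr_open adm (basic_nbhd f A e)) (intr_basic f hA he).
  by exists g.
- move=> h U hU hf; have [A [hA [e he hs]]] := hU f hf.
  have [g [hSg hg]] := h A hA e he; exists g; split => //; exact: hs.
Qed.

Lemma gen_openI adm (U V : set C) : (forall A B, adm A -> adm B -> adm (A `|` B)) ->
  gen_open adm U -> gen_open adm V -> gen_open adm (U `&` V).
Proof.
move=> hU' hU hV f [/hU [A [hA [e he sA]]] /hV [B [hB [d hd sB]]]].
exists (A `|` B); split; first exact: hU'.
exists (Num.min e d); first by rewrite lt_min he hd.
have me : Num.min e d <= e by rewrite ge_min lexx.
have md : Num.min e d <= d by rewrite ge_min lexx orbT.
move=> g hg; split.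
- apply: sA; move=> x hx; apply: (lt_le_trans _ me); apply: hg; by left.
- apply: sB; move=> x hx; apply: (lt_le_trans _ md); apply: hg; by right.
Qed.

Lemma gen_openT (adm : set (set X)) : adm set0 -> @gen_open R X adm setT.
Proof. by move=> h0 f _; exists set0; split => //; exists 1. Qed.

Lemma compact_adm_U : forall A B : set X, compact A -> compact B -> compact (A `|` B).
Proof. by move=> A B hA hB; exact: compactU. Qed.
Lemma finite_adm_U : forall A B : set X, finite_set A -> finite_set B -> finite_set (A `|` B).
Proof. by move=> A B hA hB; rewrite finite_setU. Qed.

Lemma cst_C (c : R) : continuous (fun _ : X => c).
Proof. exact: c_cst. Qed.
Definition cstC (c : R) : C := exist _ (fun _ => c) (@cst_C c).

Lemma small_inv (e : R) : 0 < e -> exists N, forall n, (N <= n)%N -> (n.+1%:R)^-1 < e.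
Proof.
move=> he; exists (Num.Def.archi_bound (e^-1)) => n hn.
have h0 : 0 < e^-1 by rewrite invr_gt0.
have h1 := archi_boundP (ltW h0).
rewrite invf_plt ?posrE ?ltr0Sn //.
apply: (lt_le_trans h1); rewrite ler_nat; exact: leqW.
Qed.

Lemma inv_pos (n : nat) : 0 < (n.+1%:R : R)^-1.
Proof. by rewrite invr_gt0 ltr0Sn. Qed.


Section BigMin.
Variables (F : X -> X -> R) (P : X -> Prop).
Hypothesis hF : forall k, P k -> [/\ continuous (F k), forall y, 0 <= F k y <= 1 &
  forall y, F k y = 1 \/ True].

Lemma bigmin_cont (s : seq X) : (forall k, k \in s -> continuous (F k)) ->
  continuous (fun y => \big[Num.min/1]_(k <- s) F k y).
Proof.
elim: s => [|a s IH] hs.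
  have -> : (fun y => \big[Num.min/1]_(k <- [::]) F k y) = (fun=> 1).
    by apply: funext => y; rewrite big_nil.
  exact: c_cst.
have -> : (fun y => \big[Num.min/1]_(k <- a :: s) F k y) =
          (fun y => Num.min (F a y) (\big[Num.min/1]_(k <- s) F k y)).
  by apply: funext => y; rewrite big_cons.
apply: c_min; first by apply: hs; rewrite inE eqxx.
by apply: IH => k hk; apply: hs; rewrite inE hk orbT.
Qed.

Lemma bigmin_le (s : seq X) y k : k \in s -> \big[Num.min/1]_(j <- s) F j y <= F k y.
Proof.
elim: s => [//|a s IH]; rewrite inE big_cons ge_min => /orP[/eqP ->|hk].
  by rewrite lexx.
by rewrite IH ?orbT.
Qed.

Lemma bigmin_le1 (s : seq X) y : \big[Num.min/1]_(j <- s) F j y <= 1.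
Proof. elim: s => [|a s IH]; by rewrite ?big_nil ?big_cons ?ge_min ?IH ?orbT. Qed.

Lemma bigmin_ge0 (s : seq X) y : (forall k, k \in s -> 0 <= F k y) ->
  0 <= \big[Num.min/1]_(j <- s) F j y.
Proof.
elim: s => [|a s IH] hs; first by rewrite big_nil.
rewrite big_cons le_min hs ?inE ?eqxx //= IH // => k hk; apply: hs.
by rewrite inE hk orbT.
Qed.

Lemma bigmin_eq1 (s : seq X) y : (forall k, k \in s -> F k y = 1) ->
  \big[Num.min/1]_(j <- s) F j y = 1.
Proof.
elim: s => [|a s IH] hs; first by rewrite big_nil.
rewrite big_cons hs ?inE ?eqxx // IH; first by rewrite minxx.
by move=> k hk; apply: hs; rewrite inE hk orbT.
Qed.
End BigMin.

Variable hX : tychonoff_space R X.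
Variable x0 : X.

Lemma urysohn (K B : set X) : compact K -> closed B -> (forall x, K x -> ~ B x) ->
  exists u : C, [/\ forall x, K x -> u^^ x = 0, forall x, B x -> u^^ x = 1 &
                    forall x, 0 <= u^^ x <= 1].
Proof.
move=> hK hB hKB.
pose Pf k (f : X -> R) := [/\ continuous f, forall y, 0 <= f y <= 1, f k = 0 &
                             forall y, B y -> f y = 1].
pose fk k := eps (fun _ => 0) (Pf k).
have fkP : forall k, K k -> Pf k (fk k).
  move=> k hk; apply: (@epsP _ _ (Pf k)); have [f hf] := hX.2 k B hB (hKB k hk).
  by exists f.
have h2 : (0 : R) < 2^-1 by rewrite invr_gt0 ltr0n.
move: (compact_cover_gen x0 hK) => /(_ X K (fun k => [set y | fk k y < 2^-1])) [].
- by move=> k hk; case: (fkP k hk) => hc _ _ _; exact: open_lt_fun.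
- move=> k hk; exists k => //=; by case: (fkP k hk) => _ _ -> _.
move=> D hD hKD.
have hDK : forall k, k \in D -> K k by move=> k /hD; rewrite in_setE.
pose g y := \big[Num.min/1]_(k <- D) fk k y.
have gc : continuous g.
  apply: (bigmin_cont (F := fk)) => k /hDK hk; by case: (fkP k hk).
have g1 : forall y, g y <= 1 by move=> y; exact: bigmin_le1.
have g0 : forall y, 0 <= g y.
  move=> y; apply: bigmin_ge0 => k /hDK hk; case: (fkP k hk) => _ h _ _.
  by case/andP: (h y).
have gB : forall y, B y -> g y = 1.
  move=> y hy; apply: bigmin_eq1 => k /hDK hk; case: (fkP k hk) => _ _ _; exact.
have gK : forall y, K y -> g y < 2^-1.
  move=> y /hKD [k /= hk hy]; exact: (le_lt_trans (bigmin_le _ _ hk) hy).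
pose u y := Num.max 0 (2 * g y - 1).
have uc : continuous u.
  apply: c_max; first exact: c_cst.
  apply: c_add; last exact: c_cst.
  apply: c_mul; [exact: c_cst | exact: gc].
exists (exist _ u uc); split => /=.
- move=> x hx; apply/max_idPl; have := gK x hx; have := g0 x; lra.
- move=> x hx; rewrite /u gB // (_ : 2 * 1 - 1 = (1:R)); last by lra.
  by apply/max_idPr; rewrite ler01.
- move=> x; rewrite /u le_max lexx /= ge_max ler01 /=; have := g1 x; lra.
Qed.

End Top.

Set Implicit Arguments. Unset Strict Implicit. Unset Printing Implicit Defensive.
Import Order.TTheory GRing.Theory Num.Theory.
Import numFieldNormedType.Exports.
Local Open Scope classical_set_scope.
Local Open Scope ring_scope.

Section Covers.
Variables (R : realType) (X : topologicalType).
Variable hX : tychonoff_space R X.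
Variable x0 : X.

Lemma closed1 (p : X) : closed [set p].
Proof. exact: (accessible_closed_set1 hX.1). Qed.

Lemma openC1 (p : X) : open (~` [set p]).
Proof. exact: closed_openC (@closed1 p). Qed.

Lemma noncompact_pt : ~ compact [set: X] -> forall K : set X, compact K -> exists p, ~ K p.
Proof.
move=> hnc K hK; apply: contrapT => hn; apply: hnc.
have -> : [set: X] = K.
  by apply/seteqP; split => // x _; apply: contrapT => hx; apply: hn; exists x.
exact: hK.
Qed.

Lemma fin_seq (F : set X) : finite_set F -> exists s : seq X, forall x, F x <-> x \in s.
Proof.
move/finite_fsetP => [B ->]; exists B => x; by split.
Qed.

Lemma incr_fin (L : nat -> set X) (F : set X) : (forall n m, (n <= m)%N -> L n `<=` L m) ->
  finite_set F -> (forall x, F x -> exists n, L n x) ->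
  exists N, forall m, (N <= m)%N -> F `<=` L m.
Proof.
move=> hL /fin_seq [s hs] hF.
suff : exists N, forall m, (N <= m)%N -> forall x, x \in s -> L m x.
  by move=> [N hN]; exists N => m hm x /hs; apply: hN.
have : forall x, x \in s -> exists n, L n x by move=> x /hs; apply: hF.
elim: s {hs hF} => [|a s IH] hs; first by exists 0%N.
have hs' : forall x, x \in s -> exists n, L n x.
  by move=> x hx; apply: hs; rewrite inE hx orbT.
have [N1 h1] := IH hs'.
have [n2 h2] := hs a (mem_head a s).
exists (maxn N1 n2) => m hm x; rewrite inE => /orP[/eqP ->|hx].
  by apply: (hL n2) => //; apply: leq_trans hm; rewrite leq_maxr.
by apply: h1 => //; apply: leq_trans hm; rewrite leq_maxl.
Qed.

Lemma bound_fin (F : set X) (phi : X -> R) : finite_set F ->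
  exists N : nat, forall x, F x -> phi x < N%:R.
Proof.
move=> hF.
have h1 : forall n m, (n <= m)%N -> [set x | phi x < n%:R] `<=` [set x | phi x < m%:R].
  move=> n m hnm x /= hx; apply: (lt_le_trans hx); by rewrite ler_nat.
have h2 : forall x, F x -> exists n, [set x | phi x < n%:R] x.
  move=> x _; exists (Num.Def.archi_bound `|phi x|) => /=.
  apply: le_lt_trans (archi_boundP (normr_ge0 _)); exact: ler_norm.
have [N hN] := @incr_fin (fun n => [set x | phi x < n%:R]) F h1 hF h2.
by exists N => x hx; apply: (hN N (leqnn N)).
Qed.

Lemma omega_many (y : nat -> set X) : (forall n, y n <> setT) ->
  omega_cover (range y) -> forall F, finite_set F -> forall N, exists n, (N <= n)%N /\ F `<=` y n.
Proof.
move=> hy [_ _ hw] F hF N.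
pose p k := eps x0 (fun p => ~ y k p).
have pP : forall k, ~ y k (p k).
  move=> k; apply: (@epsP _ _ (fun p => ~ y k p)); apply: contrapT => hn; apply: (hy k).
  by apply/seteqP; split => // x _; apply: contrapT => hx; apply: hn; exists x.
have hF' : finite_set (F `|` [set p k | k in `I_N]).
  by rewrite finite_setU; split => //; apply: finite_image; exact: finite_II.
have [V [n _ <-] hV] := hw _ hF'.
exists n; split; last by move=> x hx; apply: hV; left.
rewrite leqNgt; apply/negP => hn; apply: (pP n); apply: hV; right; by exists n.
Qed.

Lemma not_omega (y : nat -> set X) : (forall n, open (y n)) -> (forall n, y n <> setT) ->
  ~ omega_cover (range y) -> exists F, finite_set F /\ forall n, ~ F `<=` y n.
Proof.
move=> ho hy hn; apply: contrapT => hF; apply: hn.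
have hF' : forall F, finite_set F -> exists n, F `<=` y n.
  move=> F fF; apply: contrapT => h; apply: hF; exists F; split => // n hn'.
  by apply: h; exists n.
split.
- split; first by move=> V [n _ <-].
  move=> x; have [n hn] := hF' _ (finite_set1 x); exists (y n); first by exists n.
  exact: hn.
- by move=> [n _ /hy].
- move=> F fF; have [n hn] := hF' _ fF; exists (y n) => //; by exists n.
Qed.

Lemma gamma_omega (U : set (set X)) : gamma_cover U -> omega_cover U.
Proof.
move=> [hinf hoc hT hfin]; split => // F fF.
apply: contrapT => hn; apply: hinf.
apply: (sub_finite_set _ (hfin F fF)) => V hV; split => // hFV; apply: hn; by exists V.
Qed.

Lemma not_gamma (y : nat -> set X) : (forall n, open (y n)) -> (forall n, y n <> setT) ->
  ~ gamma_cover (range y) -> exists F, finite_set F /\ forall N, exists n, (N <= n)%N /\ ~ F `<=` y n.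
Proof.
move=> ho hy hn; apply: contrapT => hF; apply: hn.
have hF' : forall F, finite_set F -> exists N, forall n, (N <= n)%N -> F `<=` y n.
  move=> F fF; apply: contrapT => h; apply: hF; exists F; split => // N.
  apply: contrapT => h2; apply: h; exists N => n hn; apply: contrapT => h3; apply: h2.
  by exists n.
pose p V := eps x0 (fun p => ~ V p).
have pP : forall n, ~ y n (p (y n)).
  move=> n; apply: (@epsP _ _ (fun q => ~ y n q)); apply: contrapT => h; apply: (hy n).
  by apply/seteqP; split => // x _; apply: contrapT => hx; apply: h; exists x.
split.
- move=> fr; have [N hN] := hF' _ (finite_image p fr).
  by apply: (pP N); apply: (hN N (leqnn N)); exists (y N) => //; exists N.
- split; first by move=> V [n _ <-].
  move=> x; have [N hN] := hF' _ (finite_set1 x); exists (y N); first by exists N.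
  exact: (hN N (leqnn N)).
- by move=> [n _ /hy].
- move=> F fF; have [N hN] := hF' _ fF.
  apply: (sub_finite_set _ (finite_image y (finite_II N))).
  move=> V [[n _ <-] hnF]; exists n => //=.
  by rewrite ltnNge; apply/negP => /hN.
Qed.

End Covers.

Set Implicit Arguments. Unset Strict Implicit. Unset Printing Implicit Defensive.
Import Order.TTheory GRing.Theory Num.Theory.
Import numFieldNormedType.Exports.
Local Open Scope classical_set_scope.
Local Open Scope ring_scope.

Section M1.
Variables (R : realType) (X : topologicalType).
Variable hX : tychonoff_space R X.
Variable x0 : X.

Lemma NKX_inv (E : set (set X)) : N_KX E ->
  exists K, [/\ compact K, K !=set0 & E = nbhds_of_set K].
Proof. by move=> [K [hK hne] <-]; exists K. Qed.

Lemma NKX_in (K : set X) : compact K -> K !=set0 -> N_KX (nbhds_of_set K).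
Proof. by move=> hK hne; exists K. Qed.

Lemma compactU1 (K : set X) : compact K -> compact (K `|` [set x0]).
Proof. by move=> hK; apply: compactU => //; exact: compact_set1. Qed.

Lemma U1_ne (K : set X) : (K `|` [set x0]) !=set0.
Proof. by exists x0; right. Qed.

Lemma h1_K : forall A E, k_cover A -> @N_KX X E -> exists p, A p /\ E p.
Proof.
move=> A E [[ho hc] hT hk] /NKX_inv [K [hK _ ->]].
have [V hV hKV] := hk K hK; exists V; split => //; split; first exact: ho.
by split => // hVT; apply: hT; rewrite -hVT.
Qed.

Lemma h2_K : forall f : set (set X) -> set X, (forall E, N_KX E -> E (f E)) ->
  k_cover [set f E | E in @N_KX X].
Proof.
move=> f hf.
have fP : forall K, compact K -> K !=set0 -> [/\ open (f (nbhds_of_set K)),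
    f (nbhds_of_set K) <> setT & K `<=` f (nbhds_of_set K)].
  by move=> K hK hne; have [? [? ?]] := hf _ (NKX_in hK hne).
split.
- split; first by move=> V [E /NKX_inv [K [hK hne ->]] <-]; case: (fP K hK hne).
  move=> x; exists (f (nbhds_of_set [set x])).
    by exists (nbhds_of_set [set x]) => //; apply: NKX_in; [exact: compact_set1|exists x].
  by case: (fP [set x] (@compact_set1 _ x) (ex_intro _ x erefl)) => _ _; apply.
- by move=> [E /NKX_inv [K [hK hne ->]]]; case: (fP K hK hne).
- move=> K hK; exists (f (nbhds_of_set (K `|` [set x0]))).
    by exists (nbhds_of_set (K `|` [set x0])) => //; apply: NKX_in; [exact: compactU1|exact: U1_ne].
  case: (fP _ (compactU1 hK) (U1_ne _)) => _ _ h y hy; apply: h; by left.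
Qed.

Lemma dualA : games_dual (G_NK_notOmega X) (G_K_Omega X).
Proof. exact: (@dual_abs _ set0 _ _ _ h1_K h2_K). Qed.

Lemma dualAG : games_dual (G_NK_notGamma X) (G_K_Gamma X).
Proof. exact: (@dual_abs _ set0 _ _ _ h1_K h2_K). Qed.

Lemma Ipre_A_sigma : I_wins_pre (G_NK_notOmega X) -> sigma_compact X.
Proof.
move=> [e [he we]].
pose K n := eps set0 (fun K => [/\ compact K, K !=set0 & e n = nbhds_of_set K]).
have KP : forall n, [/\ compact (K n), K n !=set0 & e n = nbhds_of_set (K n)].
  move=> n; exact: (@epsP _ _ (fun K => [/\ compact K, K !=set0 & e n = nbhds_of_set K])
     (NKX_inv (he n))).
exists K; split; first by move=> n; case: (KP n).
apply/seteqP; split => // x _; apply: contrapT => hx.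
apply: (we (fun _ => ~` [set x])).
  move=> n; case: (KP n) => _ _ ->; split; first exact: (openC1 hX).
  split; last by move=> y hy hyx; apply: hx; exists n => //; rewrite -hyx.
  move=> hT; have h : (~` [set x]) x by rewrite hT.
  by apply: h.
move=> /= [[_ hc] _ _]; have [V [n _ <-]] := hc x; by apply.
Qed.

Lemma sigma_incr : sigma_compact X -> exists L : nat -> set X,
  [/\ forall n, compact (L n), forall n, L n !=set0,
      forall n m, (n <= m)%N -> L n `<=` L m & forall x, exists n, L n x].
Proof.
move=> [K [hK hU]].
pose fix L n := if n is m.+1 then L m `|` K n else K 0%N `|` [set x0].
have Lc : forall n, compact (L n).
  elim=> [|n IH] /=; [exact: compactU1|exact: compactU].
have Lne : forall n, L n !=set0.
  by elim=> [|n [y hy]] /=; [exact: U1_ne|exists y; left].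
have Linc : forall n m, (n <= m)%N -> L n `<=` L m.
  move=> n m /subnK <-; elim: (m - n)%N => [//|k IH] y /IH hy; by rewrite addSn; left.
have KL : forall n, K n `<=` L n by case=> [|n] y hy /=; [left|right].
exists L; split => // x.
have : (\bigcup_n K n) x by rewrite hU.
by move=> [n _ hn]; exists n; apply: KL.
Qed.

Lemma sigma_Ipre_A : sigma_compact X -> I_wins_pre (G_NK_notOmega X).
Proof.
move=> /sigma_incr [L [Lc Lne Linc Lcov]].
exists (fun n => nbhds_of_set (L n)); split; first by move=> n; apply: NKX_in.
move=> y hy /=; apply; split.
- split; first by move=> V [n _ <-]; case: (hy n).
  move=> x; have [n hn] := Lcov x; exists (y n); first by exists n.
  by case: (hy n) => _ [_]; apply.
- by move=> [n _ hn]; case: (hy n) => _ [].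
- move=> F fF; have [N hN] := incr_fin Linc fF (fun x _ => Lcov x).
  exists (y N); first by exists N.
  move=> x /(hN N (leqnn N)); by case: (hy N) => _ [_]; apply.
Qed.

End M1.

Set Implicit Arguments. Unset Strict Implicit. Unset Printing Implicit Defensive.
Import Order.TTheory GRing.Theory Num.Theory.
Import numFieldNormedType.Exports.
Local Open Scope classical_set_scope.
Local Open Scope ring_scope.

Section M2.
Variables (R : realType) (X : topologicalType).
Variable hX : tychonoff_space R X.
Variable x0 : X.
Local Notation C := (CX R X).
Local Notation Ck := (Ck_open R X).
Local Notation Cp := (Cp_open R X).
Local Notation zero := (CX0 R X).
Local Notation "f ^^" := (proj1_sig f) (at level 2, format "f ^^").

Definition iv (n : nat) : R := (n.+1%:R)^-1.
Lemma iv_gt0 n : 0 < iv n. Proof. exact: inv_pos. Qed.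

Lemma norm0B (v : R) : `|0 - v| = `|v|.
Proof. by rewrite sub0r normrN. Qed.

Lemma clos_p (S : set C) (f : C) :
  clos Cp S f <-> (forall F, finite_set F -> forall e : R, 0 < e ->
                     exists g, S g /\ basic_nbhd f F e g).
Proof. exact: clos_gen. Qed.

Lemma clos_k (S : set C) (f : C) :
  clos Ck S f <-> (forall K, compact K -> forall e : R, 0 < e ->
                     exists g, S g /\ basic_nbhd f K e g).
Proof. exact: clos_gen. Qed.

Lemma C_neq (f g : C) : f <> g -> exists x, f^^ x <> g^^ x.
Proof.
move=> hne; apply: contrapT => h; apply: hne; apply: C_ext => x.
by apply: contrapT => hx; apply: h; exists x.
Qed.

Lemma cd_refine (y : nat -> C) (h : C) : forall N F (e : R), finite_set F -> 0 < e ->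
  (forall n, (N <= n)%N -> basic_nbhd h F e (y n) -> y n = h) ->
  exists F' (e' : R), [/\ finite_set F', 0 < e' &
     forall n, basic_nbhd h F' e' (y n) -> y n = h].
Proof.
elim=> [|N IH] F e fF he hyp; first by exists F, e; split => // n; apply: hyp.
have [hN|hN] := pselect (y N = h).
  apply: (IH F e) => // n; rewrite leq_eqVlt => /orP[/eqP <-|hn] //; exact: hyp.
have [x hx] := C_neq hN.
have hd : 0 < `|(y N)^^ x - h^^ x| by rewrite normr_gt0 subr_eq0; apply/eqP.
apply: (IH (F `|` [set x]) (Num.min e `|(y N)^^ x - h^^ x|)).
- by rewrite finite_setU; split => //; exact: finite_set1.
- by rewrite lt_min he hd.
- move=> n; rewrite leq_eqVlt => /orP[/eqP <-|hn] hb.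
    have := hb x (or_intror erefl); rewrite distrC => hlt.
    have : `|(y N)^^ x - h^^ x| < `|(y N)^^ x - h^^ x|.
      apply: (lt_le_trans hlt); by rewrite ge_min lexx orbT.
    by rewrite ltxx.
  apply: hyp => // z hz; apply: (lt_le_trans (hb z (or_introl hz))).
  by rewrite ge_min lexx.
Qed.

Lemma cd_of_loc (y : nat -> C) :
  (forall h : C, exists F, finite_set F /\ exists e : R, 0 < e /\
     exists N, forall n, (N <= n)%N -> ~ basic_nbhd h F e (y n)) ->
  closed_discrete Cp (range y).
Proof.
move=> hloc.
have ref : forall h, exists F' (e' : R), [/\ finite_set F', 0 < e' &
     forall n, basic_nbhd h F' e' (y n) -> y n = h].
  move=> h; have [F [fF [e [he [N hN]]]]] := hloc h.
  apply: (cd_refine fF he (N := N)) => n hn hb; exfalso; exact: hN n hn hb.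
split.
- move=> h /clos_p hc; have [F' [e' [fF' he' hF']]] := ref h.
  have [g [[n _ <-] hg]] := hc F' fF' e' he'.
  by exists n => //; apply: hF'.
- move=> h [m _ hm]; have [F' [e' [fF' he' hF']]] := ref h.
  exists (cint (@finite_set X) (basic_nbhd h F' e')); split; first exact: intr_open.
  apply/seteqP; split.
    by move=> z [/intr_sub hz [n _ hn]]; rewrite -hn; apply: hF'; rewrite hn.
  move=> z ->; split; last by exists m.
  exact: intr_basic.
Qed.

Definition ury (K B : set X) : C :=
  eps zero (fun u => [/\ forall x, K x -> u^^ x = 0, forall x, B x -> u^^ x = 1 &
                          forall x, 0 <= u^^ x <= 1]).

Lemma uryP (K B : set X) : compact K -> closed B -> (forall x, K x -> ~ B x) ->
  [/\ forall x, K x -> (ury K B)^^ x = 0, forall x, B x -> (ury K B)^^ x = 1 &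
      forall x, 0 <= (ury K B)^^ x <= 1].
Proof.
move=> hK hB hKB; rewrite /ury.
apply: (@epsP _ _ (fun u : C => [/\ forall x, K x -> u^^ x = 0, forall x, B x -> u^^ x = 1 &
                          forall x, 0 <= u^^ x <= 1])).
exact: (urysohn hX x0 hK hB hKB).
Qed.

Lemma uryN (K U : set X) : compact K -> open U -> K `<=` U ->
  [/\ forall x, K x -> (ury K (~` U))^^ x = 0, forall x, ~ U x -> (ury K (~` U))^^ x = 1 &
      forall x, 0 <= (ury K (~` U))^^ x <= 1].
Proof.
move=> hK hU hKU; apply: uryP => //; first exact: open_closedC.
by move=> x /hKU hx; apply.
Qed.

Definition mkC (f : X -> R) : C := eps zero (fun h => forall y, h^^ y = f y).
Lemma mkCP (f : X -> R) : continuous f -> forall y, (mkC f)^^ y = f y.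
Proof.
move=> hf; apply: (@epsP _ _ (fun h : C => forall y, h^^ y = f y)).
by exists (exist _ f hf).
Qed.

Lemma C_cont (f : C) : continuous f^^.
Proof. exact: proj2_sig f. Qed.

Lemma kcover_compact : compact [set: X] -> forall U, ~ @k_cover X U.
Proof.
move=> hc U [_ hT hk]; have [V hV hTV] := hk _ hc; apply: hT.
by have -> : [set: X] = V by apply/seteqP; split.
Qed.

End M2.

Set Implicit Arguments. Unset Strict Implicit. Unset Printing Implicit Defensive.
Import Order.TTheory GRing.Theory Num.Theory.
Import numFieldNormedType.Exports.
Local Open Scope classical_set_scope.
Local Open Scope ring_scope.

Section Real.
Variable R : realType.
Lemma distP (a b e : R) : `|a - b| < e -> a - e < b /\ b < a + e.
Proof. by rewrite ltr_distlC => /andP. Qed.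
Lemma absP (v e : R) : `|v| < e -> - e < v /\ v < e.
Proof. by rewrite ltr_norml => /andP. Qed.
Lemma absI (v e : R) : - e < v -> v < e -> `|v| < e.
Proof. by move=> h1 h2; rewrite ltr_norml h1 h2. Qed.
Lemma absGe (v e : R) : e <= v -> e <= `|v|.
Proof. by move=> h; apply: (le_trans h); exact: ler_norm. Qed.
End Real.

Section M3.
Variables (R : realType) (X : topologicalType).
Variable hX : tychonoff_space R X.
Variable x0 : X.
Local Notation C := (CX R X).
Local Notation Ck := (Ck_open R X).
Local Notation Cp := (Cp_open R X).
Local Notation zero := (CX0 R X).
Local Notation "f ^^" := (proj1_sig f) (at level 2, format "f ^^").
Local Notation iv := (@iv R).
Local Notation cstc c := (@cstC R X c).

Lemma iv_small (e : R) : 0 < e -> exists N, forall n, (N <= n)%N -> iv n < e.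
Proof. exact: small_inv. Qed.

Lemma nbhd0_intr K (e : R) : compact K -> 0 < e ->
  nbhd_open Ck zero (cint (@compact X) (basic_nbhd zero K e)).
Proof. by move=> hK he; split; [exact: intr_open | exact: intr_basic]. Qed.

Section Compact.
Hypothesis hc : compact [set: X].

Lemma IpreA_c : I_wins_pre (G_NK_notOmega X).
Proof.
apply: (sigma_Ipre_A x0); exists (fun _ => setT); split => //.
by apply/seteqP; split => // x _; exists 0%N.
Qed.

Lemma IpreB_c : I_wins_pre (G_Nk0_notOmegap R X).
Proof.
exists (fun n => cint (@compact X) (basic_nbhd zero setT (iv n))); split.
  by move=> n; apply: nbhd0_intr => //; exact: iv_gt0.
move=> x hx /=; apply; apply/clos_p => F fF e he.
have [N hN] := iv_small he; exists (x N); split; first by exists N.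
move=> y _; apply: (lt_trans (intr_sub (hx N) y I)); exact: hN.
Qed.

Lemma cst_basic (n : nat) (f : C) y :
  basic_nbhd (cstc (iv n)) setT (iv n / 2) f -> 0 < f^^ y < 2 * iv n.
Proof.
move=> /(_ y I) /distP /= [h1 h2]; have := iv_gt0 R n => h0.
by apply/andP; split; lra.
Qed.

Lemma IpreC_c : I_wins_pre (G_Tk_CDp R X).
Proof.
exists (fun n => cint (@compact X) (basic_nbhd (cstc (iv n)) setT (iv n / 2))); split.
  move=> n; split; first exact: intr_open.
  exists (cstc (iv n)); apply: intr_basic => //; have := iv_gt0 R n; lra.
move=> x hx /= [hcl _].
have hb : forall n y, 0 < (x n)^^ y < 2 * iv n.
  by move=> n y; apply: cst_basic; exact: intr_sub (hx n).
have : clos Cp (range x) zero.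
  apply/clos_p => F fF e he.
  have he2 : 0 < e / 2 by lra.
  have [N hN] := iv_small he2.
  exists (x N); split; first by exists N.
  move=> y _ /=; rewrite norm0B; have /andP[h1 h2] := hb N y; have := hN N (leqnn N).
  move=> h3; apply: absI; lra.
move=> /hcl [m _ hm]; have /andP[h1 _] := hb m x0; move: h1; rewrite hm /=; lra.
Qed.

Lemma IImarkA'_c : II_wins_mark (G_K_Omega X).
Proof.
exists (fun _ _ => set0); split; first by move=> E n /(kcover_compact hc).
by move=> e /(_ 0%N) /(kcover_compact hc).
Qed.

Lemma IImarkM_c (M : set (set C)) : (forall S, M S -> clos Ck S zero) ->
  II_wins_mark (G1 M (Omega_pt Cp zero)).
Proof.
move=> hM.
pose t S n := eps zero (fun s => S s /\ basic_nbhd zero setT (iv n) s).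
have tP : forall S n, M S -> S (t S n) /\ basic_nbhd zero setT (iv n) (t S n).
  move=> S n hS; apply: (@epsP _ _ (fun s => S s /\ basic_nbhd zero setT (iv n) s)).
  have := (clos_k _ _).1 (hM S hS) setT hc (iv n) (iv_gt0 R n).
  by move=> [g [? ?]]; exists g.
exists t; split; first by move=> E n hE; case: (tP E n hE).
move=> e he /=; apply/clos_p => F fF eps' he'.
have [N hN] := iv_small he'; exists (t (e N) N); split; first by exists N.
move=> y _; case: (tP (e N) N (he N)) => _ /(_ y I) h.
exact: (lt_trans h (hN N (leqnn N))).
Qed.

End Compact.

End M3.

Set Implicit Arguments. Unset Strict Implicit. Unset Printing Implicit Defensive.
Import Order.TTheory GRing.Theory Num.Theory.
Import numFieldNormedType.Exports.
Local Open Scope classical_set_scope.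
Local Open Scope ring_scope.

Section M4.
Variables (R : realType) (X : topologicalType).
Variable hX : tychonoff_space R X.
Variable x0 : X.
Local Notation C := (CX R X).
Local Notation Ck := (Ck_open R X).
Local Notation Cp := (Cp_open R X).
Local Notation zero := (CX0 R X).
Local Notation "f ^^" := (proj1_sig f) (at level 2, format "f ^^").
Local Notation iv := (@iv R).
Local Notation cstc c := (@cstC R X c).
Local Notation ury := (@ury R X).

Lemma not_sub (F U : set X) : ~ F `<=` U -> exists2 x, F x & ~ U x.
Proof.
move=> h; apply: contrapT => hn; apply: h => x hx; apply: contrapT => hu.
by apply: hn; exists x.
Qed.

Definition KW (W : set C) : set X :=
  eps set0 (fun K => compact K /\ exists e : R, 0 < e /\ basic_nbhd zero K e `<=` W).
Lemma KWP W : nbhd_open Ck zero W ->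
  compact (KW W) /\ exists e : R, 0 < e /\ basic_nbhd zero (KW W) e `<=` W.
Proof.
move=> [hop hW0]; apply: (@epsP _ _ (fun K => compact K /\ exists e : R, 0 < e /\
  basic_nbhd zero K e `<=` W)).
have [K [hK [e he hs]]] := hop zero hW0; exists K; split => //; by exists e.
Qed.

Definition KR (E : set (set X)) : set X :=
  eps set0 (fun K => [/\ compact K, K !=set0 & E = nbhds_of_set K]).
Lemma KRP E : N_KX E -> [/\ compact (KR E), KR E !=set0 & E = nbhds_of_set (KR E)].
Proof.
move=> hE; exact: (@epsP _ _ (fun K => [/\ compact K, K !=set0 & E = nbhds_of_set K])
  (NKX_inv hE)).
Qed.

Definition pK (E : set (set X)) : X := eps x0 (fun p => ~ KR E p).

Section NC.
Hypothesis hnc : ~ compact [set: X].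

Lemma pKP E : N_KX E -> ~ KR E (pK E).
Proof.
move=> hE; apply: (@epsP _ _ (fun p => ~ KR E p)).
by case: (KRP hE) => hK _ _; exact: noncompact_pt hnc _ hK.
Qed.

Lemma nbhd_shape E (f : C) (b : R) : N_KX E ->
  (forall y, KR E y -> `|f^^ y| < b) ->
  E ([set y | `|f^^ y| < b] `&` ~` [set pK E]).
Proof.
move=> hE hb; case: (KRP hE) => hK _ hEq; rewrite {1}hEq.
split; first by apply: openI; [apply: open_lt_fun; apply: c_abs; exact: C_cont
                              | exact: (@openC1 R X hX (pK E))].
split.
  move=> hT; have : ([set y | `|f^^ y| < b] `&` ~` [set pK E]) (pK E) by rewrite hT.
  by move=> [_ /(_ erefl)].
move=> y hy; split; first exact: hb.
by move=> hyp; apply: (pKP hE); rewrite -hyp.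
Qed.


Lemma transl_BA : le_II (G_Nk0_notOmegap R X) (G_NK_notOmega X).
Proof.
apply: (@transl (G_Nk0_notOmegap R X) (G_NK_notOmega X)
   (fun n (E : set (set X)) => cint (@compact X) (basic_nbhd zero (KR E) (iv n)))
   (fun n (f : C) (E : set (set X)) => [set y | `|f^^ y| < iv n] `&` ~` [set pK E])).
- move=> n E hE /=; case: (KRP hE) => hK _ _; apply: nbhd0_intr => //; exact: iv_gt0.
- move=> n E f hE /= /intr_sub hf; apply: nbhd_shape => // y hy.
  by have := hf y hy; rewrite norm0B.
- move=> E p hE hp /= gB hw; apply: gB; apply/clos_p => F fF e he.
  have [N hN] := iv_small he.
  have hT : forall n, [set y | `|(p n)^^ y| < iv n] `&` ~` [set pK (E n)] <> setT.
    move=> n hT; have h : ([set y | `|(p n)^^ y| < iv n] `&` ~` [set pK (E n)]) (pK (E n))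
      by rewrite hT.
    by case: h => _ /(_ erefl).
  have [n [hn hFn]] := omega_many x0 hT hw fF N.
  exists (p n); split; first by exists n.
  move=> x /hFn [hx _] /=; rewrite norm0B; exact: (lt_trans hx (hN n hn)).
Qed.

Lemma cst_basicA (n : nat) A (f : C) y : A y ->
  basic_nbhd (cstc (iv n)) A (iv n / 2) f -> 0 < f^^ y < 2 * iv n.
Proof.
move=> hy /(_ y hy) /distP /= [h1 h2]; have := iv_gt0 R n => h0.
by apply/andP; split; lra.
Qed.

Lemma transl_CA : le_II (G_Tk_CDp R X) (G_NK_notOmega X).
Proof.
apply: (@transl (G_Tk_CDp R X) (G_NK_notOmega X)
   (fun n (E : set (set X)) => cint (@compact X) (basic_nbhd (cstc (iv n)) (KR E) (iv n / 2)))
   (fun n (f : C) (E : set (set X)) => [set y | `|f^^ y| < 2 * iv n] `&` ~` [set pK E])).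
- move=> n E hE /=; case: (KRP hE) => hK _ _; split; first exact: intr_open.
  exists (cstc (iv n)); apply: intr_basic => //; have := iv_gt0 R n; lra.
- move=> n E f hE /= /intr_sub hf; apply: nbhd_shape => // y hy.
  have /andP[h1 h2] := cst_basicA hy hf; apply: absI; lra.
- move=> E p hE hp /= [hcl _] hw.
  have hT : forall n, [set y | `|(p n)^^ y| < 2 * iv n] `&` ~` [set pK (E n)] <> setT.
    move=> n hT; have h : ([set y | `|(p n)^^ y| < 2 * iv n] `&` ~` [set pK (E n)]) (pK (E n))
      by rewrite hT.
    by case: h => _ /(_ erefl).
  have : clos Cp (range p) zero.
    apply/clos_p => F fF e he.
    have he2 : 0 < e / 2 by lra.
    have [N hN] := iv_small he2.
    have [n [hn hFn]] := omega_many x0 hT hw fF N.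
    exists (p n); split; first by exists n.
    move=> x /hFn [hx _] /=; rewrite norm0B; apply: (lt_trans hx); have := hN n hn; lra.
  move=> /hcl [m _ hm].
  case: (KRP (hE m)) => _ [k hk] _.
  have /andP[h1 _] := cst_basicA hk (intr_sub (hp m)).
  by move: h1; rewrite hm /= ltxx.
Qed.

Lemma transl_A'M (M : set (set C)) : (forall S, M S -> clos Ck S zero) ->
  le_II (G_K_Omega X) (G1 M (Omega_pt Cp zero)).
Proof.
move=> hM.
pose shp (s : C) n (q : X) := [set y | `|s^^ y| < iv n] `&` ~` [set q].
have shp_open : forall s n q, open (shp s n q).
  move=> s n q; apply: openI; [apply: open_lt_fun; apply: c_abs; exact: C_cont
                              | exact: (@openC1 R X hX q)].
have shp_neT : forall s n q, shp s n q <> setT.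
  move=> s n q hT; have h : shp s n q q by rewrite hT.
  by case: h => _ /(_ erefl).
apply: (@transl (G_K_Omega X) (G1 M (Omega_pt Cp zero))
   (fun n (S : set C) => [set V | exists s, S s /\ exists q, V = shp s n q])
   (fun n (V : set X) (S : set C) => eps zero (fun s => S s /\ exists q, V = shp s n q))).
- move=> n S hS /=.
  have hk : forall K, compact K -> exists2 V, (exists s, S s /\ exists q, V = shp s n q) & K `<=` V.
    move=> K hK; have [q hq] := noncompact_pt hnc hK.
    have [s [hs hb]] := (clos_k _ _).1 (hM S hS) K hK (iv n) (iv_gt0 R n).
    exists (shp s n q); first by exists s; split => //; exists q.
    move=> y hy; split; first by have := hb y hy; rewrite /= norm0B.
    by move=> hyq; apply: hq; rewrite -hyq.
  split.
  + split; first by move=> V [s [_ [q ->]]].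
    move=> x; have [V hV hxV] := hk [set x] (@compact_set1 _ x); exists V => //.
    exact: hxV.
  + by move=> [s [_ [q /esym]]]; apply: shp_neT.
  + exact: hk.
- move=> n S V hS /= hV.
  by case: (@epsP _ zero (fun s => S s /\ exists q, V = shp s n q) hV).
- move=> E p hE hp /= hw; apply/clos_p => F fF e he.
  have hpy : forall n, exists q, p n = shp (eps zero (fun s => E n s /\ exists q, p n = shp s n q)) n q.
    by move=> n; case: (@epsP _ zero (fun s => E n s /\ exists q, p n = shp s n q) (hp n)).
  have hT : forall n, p n <> setT by move=> n; have [q ->] := hpy n; exact: shp_neT.
  have [N hN] := iv_small he.
  have [n [hn hFn]] := omega_many x0 hT hw fF N.
  eexists; split; first by exists n.
  move=> x /hFn hxp; have [q hq] := hpy n; move: hxp; rewrite {1}hq => -[hx _] /=.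
  rewrite norm0B; exact: (lt_trans hx (hN n hn)).
Qed.
End NC.

Lemma neT_of (V : set X) p : ~ V p -> V <> setT.
Proof. by move=> hp hT; apply: hp; rewrite hT. Qed.

Lemma transl_AB : le_II (G_NK_notOmega X) (G_Nk0_notOmegap R X).
Proof.
apply: (@transl (G_NK_notOmega X) (G_Nk0_notOmegap R X)
   (fun n (W : set C) => nbhds_of_set (KW W `|` [set x0]))
   (fun n (U : set X) (W : set C) => ury (KW W `|` [set x0]) (~` U))).
- move=> n W hW /=; case: (KWP hW) => hK _; apply: NKX_in; [exact: compactU1|exact: U1_ne].
- move=> n W U hW /= [hU [hUT hKU]]; case: (KWP hW) => hK [e [he hs]].
  case: (uryN hX x0 (compactU1 hK) hU hKU) => h0 _ _.
  apply: hs => x hx /=; rewrite h0 ?subrr ?normr0 //; by left.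
- move=> E p hE hp /= gA hc.
  have ho : forall n, open (p n) by move=> n; case: (hp n).
  have hT : forall n, p n <> setT by move=> n; case: (hp n) => _ [].
  have [F [fF hF]] := not_omega ho hT gA.
  have [g [[n _ <-] hg]] := (clos_p _ _).1 hc F fF 1 ltr01.
  have [x hx hnx] := not_sub (hF n).
  case: (KWP (hE n)) => hK _; case: (hp n) => hU [_ hKU].
  case: (uryN hX x0 (compactU1 hK) hU hKU) => _ h1 _.
  by have := hg x hx; rewrite /= h1 // sub0r normrN normr1 ltxx.
Qed.

Definition gK (W : set C) : C * set X :=
  eps (zero, set0) (fun gk : C * set X => W gk.1 /\ compact gk.2 /\
     exists e : R, 0 < e /\ basic_nbhd gk.1 gk.2 e `<=` W).
Lemma gKP W : nonempty_open Ck W -> W (gK W).1 /\ compact (gK W).2 /\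
     exists e : R, 0 < e /\ basic_nbhd (gK W).1 (gK W).2 e `<=` W.
Proof.
move=> [hop [g hg]]; apply: (@epsP _ _ (fun gk : C * set X => W gk.1 /\ compact gk.2 /\
     exists e : R, 0 < e /\ basic_nbhd gk.1 gk.2 e `<=` W)).
have [K [hK [e he hs]]] := hop g hg; exists (g, K); split => //; split => //; by exists e.
Qed.

Lemma transl_AC : le_II (G_NK_notOmega X) (G_Tk_CDp R X).
Proof.
pose fw n (U : set X) (W : set C) := fun y => (gK W).1^^ y +
  (ury ((gK W).2 `|` [set x0]) (~` U))^^ y * (n%:R + `|(gK W).1^^ y|).
have fwc : forall n U W, continuous (fw n U W).
  move=> n U W; apply: c_add; first exact: C_cont.
  apply: c_mul; first exact: C_cont.
  apply: c_add; [exact: c_cst | apply: c_abs; exact: C_cont].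
apply: (@transl (G_NK_notOmega X) (G_Tk_CDp R X)
   (fun n (W : set C) => nbhds_of_set ((gK W).2 `|` [set x0]))
   (fun n (U : set X) (W : set C) => mkC (fw n U W))).
- move=> n W hW /=; case: (gKP hW) => _ [hK _]; apply: NKX_in; [exact: compactU1|exact: U1_ne].
- move=> n W U hW /= [hU [hUT hKU]]; case: (gKP hW) => _ [hK [e [he hs]]].
  case: (uryN hX x0 (compactU1 hK) hU hKU) => h0 _ _.
  apply: hs => x hx; rewrite mkCP // /fw h0; last by left.
  by rewrite mul0r addr0 subrr normr0.
- move=> E p hE hp /= gA.
  have ho : forall n, open (p n) by move=> n; case: (hp n).
  have hT : forall n, p n <> setT by move=> n; case: (hp n) => _ [].
  have [F [fF hF]] := not_omega ho hT gA.
  apply: cd_of_loc => h; exists F; split => //; exists 1; split => //.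
  have [N hN] := bound_fin (fun x => `|h^^ x| + 1) fF.
  exists N => n hn hb.
  have [x hx hnx] := not_sub (hF n).
  case: (gKP (hE n)) => _ [hK _]; case: (hp n) => hU [_ hKU].
  case: (uryN hX x0 (compactU1 hK) hU hKU) => _ h1 _.
  have := hb x hx; rewrite mkCP // /fw h1 // mul1r => /distP [hl hr].
  have := hN x hx => /= hNx.
  have hnN : (N%:R : R) <= n%:R by rewrite ler_nat.
  have hg : 0 <= (gK (E n)).1^^ x + `|(gK (E n)).1^^ x|.
    have := ler_norm (- (gK (E n)).1^^ x); rewrite normrN; lra.
  have hh : h^^ x <= `|h^^ x| := ler_norm _.
  lra.
Qed.

Definition SU (U : set (set X)) : set C :=
  [set s : C | exists2 V, U V & forall y, ~ V y -> s^^ y = 1].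

Lemma SU_dense U : k_cover U -> dense_sets Ck (SU U).
Proof.
move=> [[ho hcov] hT hk] g; apply/clos_k => K hK e he.
have [V hV hKV] := hk K hK.
case: (uryN hX x0 hK (ho V hV) hKV) => h0 h1 _.
pose u := ury K (~` V).
have sc : continuous (fun y => g^^ y * (1 - u^^ y) + u^^ y).
  apply: c_add; last exact: C_cont.
  apply: c_mul; first exact: C_cont.
  apply: c_add; [exact: c_cst | apply: c_opp; exact: C_cont].
exists (mkC (fun y => g^^ y * (1 - u^^ y) + u^^ y)); split.
  exists V => // y hy; rewrite mkCP // h1 //; by rewrite subrr mulr0 add0r.
move=> x hx; rewrite mkCP // h0 // subr0 mulr1 addr0 subrr normr0 //.
Qed.

Lemma transl_MA' (M : set (set C)) : (forall U, k_cover U -> M (SU U)) ->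
  le_II (G1 M (Omega_pt Cp zero)) (G_K_Omega X).
Proof.
move=> hM.
apply: (@transl (G1 M (Omega_pt Cp zero)) (G_K_Omega X)
   (fun n (U : set (set X)) => SU U)
   (fun n (s : C) (U : set (set X)) => eps set0 (fun V => U V /\ forall y, ~ V y -> s^^ y = 1))).
- by move=> n U hU /=; apply: hM.
- move=> n U s hU /= [V hV hs].
  case: (@epsP _ set0 (fun V => U V /\ forall y, ~ V y -> s^^ y = 1)) => //.
  by exists V.
- move=> E p hE hp /= hc.
  pose y n := eps set0 (fun V => E n V /\ forall z, ~ V z -> (p n)^^ z = 1).
  have hyP : forall n, E n (y n) /\ forall z, ~ y n z -> (p n)^^ z = 1.
    move=> n; apply: (@epsP _ set0 (fun V => E n V /\ forall z, ~ V z -> (p n)^^ z = 1)).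
    by case: (hp n) => V ? ?; exists V.
  have hF : forall F, finite_set F -> exists n, F `<=` y n.
    move=> F fF; have [g [[n _ <-] hg]] := (clos_p _ _).1 hc F fF 1 ltr01.
    exists n => x hx; apply: contrapT => hnx.
    have := hg x hx; case: (hyP n) => _ /(_ x hnx) ->.
    by rewrite sub0r normrN normr1 ltxx.
  rewrite -/y.
  split.
  + split; first by move=> V [n _ <-]; case: (hE n) => [[ho _] _ _]; apply: ho; exact: (hyP n).1.
    move=> x; have [n hn] := hF _ (finite_set1 x); exists (y n); first by exists n.
    exact: hn.
  + by move=> [n _ hn]; case: (hE n) => _ hT _; apply: hT; rewrite -hn; exact: (hyP n).1.
  + move=> F fF; have [n hn] := hF F fF; exists (y n) => //; by exists n.
Qed.

End M4.

Set Implicit Arguments. Unset Strict Implicit. Unset Printing Implicit Defensive.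
Import Order.TTheory GRing.Theory Num.Theory.
Import numFieldNormedType.Exports.
Local Open Scope classical_set_scope.
Local Open Scope ring_scope.

Lemma incr_seq (P : nat -> Prop) : (forall N, exists n, (N <= n)%N /\ P n) ->
  exists phi : nat -> nat, (forall i, (phi i < phi i.+1)%N) /\ forall i, P (phi i).
Proof.
move=> h.
pose nx N := eps 0%N (fun n => (N <= n)%N /\ P n).
have nxP : forall N, (N <= nx N)%N /\ P (nx N).
  by move=> N; apply: (@epsP _ _ (fun n => (N <= n)%N /\ P n)); exact: h.
pose fix phi i := if i is j.+1 then nx (phi j).+1 else nx 0%N.
exists phi; split; first by move=> i /=; case: (nxP (phi i).+1).
by case=> [|i] /=; [exact: (nxP 0%N).2 | exact: (nxP (phi i).+1).2].
Qed.

Lemma fin_lb (R : realType) n (r : 'I_n -> R) : (forall i, 0 < r i) ->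
  exists d : R, 0 < d /\ forall i, d <= r i.
Proof.
elim: n r => [|n IH] r hr.
  by exists 1; split => // -[].
have [d [hd hdi]] := IH (fun i => r (lift ord0 i)) (fun i => hr _).
exists (Num.min d (r ord0)); split; first by rewrite lt_min hd hr.
move=> i; case: (unliftP ord0 i) => [j ->|->].
  by rewrite ge_min hdi.
by rewrite ge_min lexx orbT.
Qed.

Section M5.
Variables (R : realType) (X : topologicalType).
Variable hX : tychonoff_space R X.
Variable x0 : X.
Local Notation C := (CX R X).
Local Notation Ck := (Ck_open R X).
Local Notation Cp := (Cp_open R X).
Local Notation zero := (CX0 R X).
Local Notation "f ^^" := (proj1_sig f) (at level 2, format "f ^^").
Local Notation iv := (@iv R).
Local Notation cstc c := (@cstC R X c).
Local Notation ury := (@ury R X).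

Lemma sigma_cof : sigma_compact X <->
  cof_eq_omega (nbhd_open Ck zero) (nbhd_open Cp zero).
Proof.
split.
- move=> /(sigma_incr x0) [L [Lc Lne Linc Lcov]]; split.
    exists (fun n => cint (@compact X) (basic_nbhd zero (L n) (iv n))); split.
      by move=> n; apply: nbhd0_intr => //; exact: iv_gt0.
    move=> V [hop hV0]; have [A [fA [e he hs]]] := hop zero hV0.
    have [N1 hN1] := incr_fin Linc fA (fun x _ => Lcov x).
    have [N2 hN2] := iv_small he.
    exists (maxn N1 N2) => f /intr_sub hf; apply: hs.
    apply: (basic_sub _ (ltW (hN2 _ (leq_maxr N1 N2)))) hf.
    exact: hN1 _ (leq_maxl N1 N2).
  move=> n e [he hcof].
  pose r i := eps 1 (fun r : R => 0 < r /\ exists K, basic_nbhd zero K r `<=` e i).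
  have rP : forall i, 0 < r i /\ exists K, basic_nbhd zero K (r i) `<=` e i.
    move=> i; apply: (@epsP _ _ (fun r : R => 0 < r /\ exists K, basic_nbhd zero K r `<=` e i)).
    case: (he i) => hop h0; have [K [_ [d hd hs]]] := hop zero h0.
    by exists d; split => //; exists K.
  have hr2 : forall i, 0 < r i / 2 by move=> i; move: (rP i).1 => h; lra.
  have [d [hd hdi]] := fin_lb hr2.
  have hV : nbhd_open Cp zero (cint (@finite_set X) (basic_nbhd zero [set x0] d)).
    by split; [exact: intr_open | apply: intr_basic => //; exact: finite_set1].
  have [i hi] := hcof _ hV.
  case: (rP i) => hr [K hK].
  have hc : basic_nbhd zero K (r i) (cstc (r i / 2)).
    by move=> y _ /=; rewrite norm0B ger0_norm; lra.
  have := intr_sub (hi _ (hK _ hc)) x0 erefl.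
  rewrite /= norm0B ger0_norm; last by lra.
  have := hdi i; lra.
- move=> [[e [he hcof]] _].
  pose K n := KW (e n).
  exists K; split; first by move=> n; case: (KWP (he n)).
  apply/seteqP; split => // x _; apply: contrapT => hx.
  have hV : nbhd_open Cp zero (cint (@finite_set X) (basic_nbhd zero [set x] 1)).
    by split; [exact: intr_open | apply: intr_basic => //; exact: finite_set1].
  have [n hn] := hcof _ hV.
  case: (KWP (he n)) => hK [d [hd hs]].
  have hdis : forall y, K n y -> ~ [set x] y.
    by move=> y hy hyx; apply: hx; exists n => //; rewrite -hyx.
  case: (uryP hX x0 hK (@closed1 R X hX x) hdis) => h0 h1 _.
  have hu : e n (ury (K n) [set x]).
    apply: hs => y hy; rewrite /= h0 // subrr normr0 //.
  have := intr_sub (hn _ hu) x erefl; rewrite /= h1 // sub0r normrN normr1 ltxx.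
  by [].
Qed.

End M5.

Set Implicit Arguments. Unset Strict Implicit. Unset Printing Implicit Defensive.
Import Order.TTheory GRing.Theory Num.Theory.
Import numFieldNormedType.Exports.
Local Open Scope classical_set_scope.
Local Open Scope ring_scope.

Section M6.
Variables (R : realType) (X : topologicalType).
Variable x0 : X.
Local Notation C := (CX R X).
Local Notation Ck := (Ck_open R X).
Local Notation Cp := (Cp_open R X).
Local Notation zero := (CX0 R X).

Lemma One_AA'' : (I_wins (G_NK_notOmega X) <-> I_wins (G_NK_notGamma X)) /\
  (I_wins_pre (G_NK_notOmega X) <-> I_wins_pre (G_NK_notGamma X)).
Proof.
have hbin : forall E1 E2, @N_KX X E1 -> N_KX E2 -> exists2 E, N_KX E & E `<=` E1 `&` E2.
  move=> E1 E2 /NKX_inv [K1 [hK1 [k hk] ->]] /NKX_inv [K2 [hK2 _ ->]].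
  exists (nbhds_of_set (K1 `|` K2)).
    by apply: NKX_in; [exact: compactU | exists k; left].
  move=> U [hU [hT hKU]]; split; split => //; split => // y hy; apply: hKU; by [left|right].
have hsub : forall x : nat -> set X, (forall n, exists2 E, N_KX E & E (x n)) ->
    ~ gamma_cover (range x) ->
    exists phi : nat -> nat, (forall i, (phi i < phi i.+1)%N) /\
      ~ omega_cover (range (fun i => x (phi i))).
  move=> x hx hg.
  have ho : forall n, open (x n).
    by move=> n; have [E /NKX_inv [K [_ _ ->]] [? _]] := hx n.
  have hT : forall n, x n <> setT.
    by move=> n; have [E /NKX_inv [K [_ _ ->]] [_ [? _]]] := hx n.
  have [F [fF hF]] := not_gamma x0 ho hT hg.
  have [phi [hphi hP]] := incr_seq hF.
  exists phi; split => // -[_ _ hw]; have [V [i _ <-] hV] := hw F fF.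
  exact: hP i hV.
have [s1 s2] := @subseq_One (set X) (@N_KX X) hbin
   (fun x => ~ omega_cover (range x)) (fun x => ~ gamma_cover (range x)) hsub.
have [m1 [m2 _]] := @win_mono (set X) (@N_KX X)
   (fun x => ~ omega_cover (range x)) (fun x => ~ gamma_cover (range x))
   (fun x h hg => h (gamma_omega hg)).
by split; split.
Qed.

Lemma One_BB'' : (I_wins (G_Nk0_notOmegap R X) <-> I_wins (G_Nk0_notGammap R X)) /\
  (I_wins_pre (G_Nk0_notOmegap R X) <-> I_wins_pre (G_Nk0_notGammap R X)).
Proof.
have hbin : forall E1 E2, nbhd_open Ck zero E1 -> nbhd_open Ck zero E2 ->
    exists2 E, nbhd_open Ck zero E & E `<=` E1 `&` E2.
  move=> E1 E2 [hh1 hz1] [hh2 hz2]; exists (E1 `&` E2); last by [].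
  split; last by split.
  by apply: gen_openI => //; exact: compact_adm_U.
have hsub : forall x : nat -> C, (forall n, exists2 E, nbhd_open Ck zero E & E (x n)) ->
    ~ converges_to Cp x zero ->
    exists phi : nat -> nat, (forall i, (phi i < phi i.+1)%N) /\
      ~ clos Cp (range (fun i => x (phi i))) zero.
  move=> x _ hc.
  have [U [hU hU0 hN]] : exists U, [/\ Cp U, U zero &
      forall N, exists n, (N <= n)%N /\ ~ U (x n)].
    apply: contrapT => hn; apply: hc => U hU hU0; apply: contrapT => h1.
    apply: hn; exists U; split => // N; apply: contrapT => h2; apply: h1; exists N.
    by move=> n hn; apply: contrapT => h3; apply: h2; exists n.
  have [phi [hphi hP]] := incr_seq hN.
  exists phi; split => // hcl; have [g [hg [i _ hi]]] := hcl U hU hU0.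
  by apply: (hP i); rewrite hi.
have [s1 s2] := @subseq_One C (nbhd_open Ck zero) hbin
   (fun x => ~ clos Cp (range x) zero) (fun x => ~ converges_to Cp x zero) hsub.
have [m1 [m2 _]] := @win_mono C (nbhd_open Ck zero)
   (fun x => ~ clos Cp (range x) zero) (fun x => ~ converges_to Cp x zero)
   (fun x h hc => h (fun U hU hU0 => (let: ex_intro N hN := hc U hU hU0 in
                     ex_intro _ (x N) (conj (hN N (leqnn N)) (ex_intro2 _ _ N I erefl))))).
by split; split.
Qed.
End M6.

End Helpers.
Import Helpers.

Local Open Scope classical_set_scope.

Theorem mainTheorem2 (R : realType) (X : topologicalType)
  (hX : tychonoff_space R X) (hne : [set: X] !=set0) :
  (* (i) *)
  [/\ games_equiv (G_NK_notOmega X) (G_Nk0_notOmegap R X),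
      games_equiv (G_NK_notOmega X) (G_Tk_CDp R X) &
      games_equiv (G_Nk0_notOmegap R X) (G_Tk_CDp R X)] /\
  (* (ii) *)
  [/\ games_equiv (G_K_Omega X) (G_Omegak0_Omegap R X),
      games_equiv (G_K_Omega X) (G_Dk_Omegap R X) &
      games_equiv (G_Omegak0_Omegap R X) (G_Dk_Omegap R X)] /\
  (* (iii) *)
  (forall G H,
     (G = G_NK_notOmega X \/ G = G_Nk0_notOmegap R X \/ G = G_Tk_CDp R X) ->
     (H = G_K_Omega X \/ H = G_Omegak0_Omegap R X \/ H = G_Dk_Omegap R X) ->
     games_dual G H) /\
  (* (iv) *)
  ((I_wins_pre (G_Tk_CDp R X) <-> sigma_compact X) /\
   (sigma_compact X <->
      cof_eq_omega (nbhd_open (Ck_open R X) (CX0 R X))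
                   (nbhd_open (Cp_open R X) (CX0 R X)))) /\
  (* (v) *)
  (forall G H,
     (G = G_NK_notGamma X \/ G = G_Nk0_notGammap R X) ->
     (H = G_NK_notOmega X \/ H = G_Nk0_notOmegap R X) ->
     equiv_for_One G H) /\
  (* (vi) *)
  equiv_for_Two (G_K_Omega X) (G_K_Gamma X).
Proof.
have [x0 _] := hne.
have dA := dualA x0.
have dAG := dualAG x0.
have [eAB eAC eA'B' eA'C'] :
  [/\ games_equiv (G_NK_notOmega X) (G_Nk0_notOmegap R X),
      games_equiv (G_NK_notOmega X) (G_Tk_CDp R X),
      games_equiv (G_K_Omega X) (G_Omegak0_Omegap R X) &
      games_equiv (G_K_Omega X) (G_Dk_Omegap R X)].
  have [hc|hnc] := pselect (compact [set: X]).
    split.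
    - exact: equiv_of_Ipre (IpreA_c x0 hc) (IpreB_c R hc).
    - exact: equiv_of_Ipre (IpreA_c x0 hc) (IpreC_c R x0 hc).
    - by apply: equiv_of_IImark (IImarkA'_c hc) (IImarkM_c hc _).
    - apply: equiv_of_IImark (IImarkA'_c hc) (IImarkM_c hc _).
      by move=> S hS; exact: hS.
  split.
  - by split; [exact: transl_AB hX x0 | exact: transl_BA hX x0 hnc].
  - by split; [exact: transl_AC hX x0 | exact: transl_CA hX x0 hnc].
  - split; first by apply: (transl_A'M hX x0 hnc).
    apply: transl_MA' => U hU; have h := SU_dense hX x0 hU; exact: (h (CX0 R X)).
  - split; first by apply: (transl_A'M hX x0 hnc) => S hS; exact: hS.
    apply: transl_MA' => U hU; have h := SU_dense hX x0 hU; exact: h.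
have [AB1 AB2 AB3 AB4] := equiv_props eAB.
have [AC1 AC2 AC3 AC4] := equiv_props eAC.
have [q1 q2] := One_AA'' x0.
have [b1 b2] := One_BB'' R X.
split.
  split => //; exact: games_equiv_trans (games_equiv_sym eAB) eAC.
split.
  split => //; exact: games_equiv_trans (games_equiv_sym eA'B') eA'C'.
split.
  move=> G H hG hH; apply: (dual_transport dA).
  - by case: hG => [->|[->|->]] //; exact: games_equiv_refl.
  - by case: hH => [->|[->|->]] //; exact: games_equiv_refl.
split.
  split; last exact: sigma_cof hX x0.
  rewrite -AC2; split; [exact: Ipre_A_sigma hX | exact: sigma_Ipre_A x0].
split.
  move=> G H hG hH; split.
  - case: hG => ->; case: hH => ->.
    + by rewrite q1.
    + by rewrite -AB1 q1.
    + by rewrite -b1 -AB1.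
    + by rewrite b1.
  - case: hG => ->; case: hH => ->.
    + by rewrite q2.
    + by rewrite -AB2 q2.
    + by rewrite -b2 -AB2.
    + by rewrite b2.
case: dA => d1 _ d3 _; case: dAG => g1 _ g3 _.
split.
- by rewrite -d1 -g1.
- by rewrite -d3 -g3.
Qed.
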